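(* Let $\Lambda$ be a countable row-finite $k$-graph without sources. There is a bijective correspondence $D\mapsto U_D$ between the subsets $D\subset\Lambda^0\times\mathbb{T}^k$ satisfying (i) and (ii) below and the $\mathcal{G}_\Lambda$-invariant open subsets of $\mathrm{Stab}(\mathcal{G}_\Lambda)^\wedge$, determined by $q^{-1}(U_D)=\{(x,z)\in\Lambda^\infty\times\mathbb{T}^k: (x(n),z)\in D\text{ for some }n\in\mathbb{Z}^k_+\}$: (i) for every $z\in\mathbb{T}^k$ the set $\{v\in\Lambda^0:(v,z)\in D\}$ is hereditary and saturated; (ii) for every $(v,z)\in D$ and every $x\in Z(v)$ there exist $\varepsilon>0$, $n\in\mathbb{Z}^k_+$ and a finite set $\{(m(i),n(i))\}_{i=1}^N\subset\mathbb{Z}^k_+\times\mathbb{Z}^k_+$ with $\sigma^{m(i)}(x)=\sigma^{n(i)}(x)$ for all $i$, such that for each $y\in Z(x(0,n))$ there is $m\in\mathbb{Z}^k_+$ with $\{y(m)\}\times T_y\subset D$, where $T_y=\{w\in\mathbb{T}^k: |z^{m(i)-n(i)}-w^{m(i)-n(i)}|<\varepsilon\text{ for all } i\text{ with }\sigma^{m(i)}(y)=\sigma^{n(i)}(y)\}$ (so $T_y=\mathbb{T}^k$ if no such $i$ exists).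
   Context: A $k$-graph is a countable category $\Lambda$ with a functor $d\colon\Lambda\to\mathbb{Z}^k_+$ (degree) such that whenever $d(\lambda)=m+n$ there is a unique factorization $\lambda=\mu\nu$ with $d(\mu)=m$, $d(\nu)=n$. $\Lambda^n=d^{-1}(n)$, $\Lambda^0$ = vertices, $r,s$ codomain/domain; row-finite without sources means $0<|v\Lambda^n|<\infty$ for all $v$, $n$, where $v\Lambda^n=\{\lambda\in\Lambda^n: r(\lambda)=v\}$. $\Omega_k=\{(p,q)\in\mathbb{Z}^k_+\times\mathbb{Z}^k_+:p\le q\}$ is the $k$-graph with $d(p,q)=q-p$; $\Lambda^\infty$ is the set of degree-preserving functors $x\colon\Omega_k\to\Lambda$, with $x(n):=x(n,n)$; $Z(\lambda)=\{x: x(0,d(\lambda))=\lambda\}$ form a basis of compact open sets. $\sigma^n(x)(p,q)=x(n+p,n+q)$. $\mathcal{G}_\Lambda=\{(x,m-n,y): m,n\in\mathbb{Z}^k_+,\ \sigma^m(x)=\sigma^n(y)\}$ with $r(x,p,y)=x$, $s(x,p,y)=y$, $(x,p,y)(y,q,w)=(x,p+q,w)$, topology basis $Z(U,m,n,V)=\{(x,m-n,y):x\in U,y\in V,\sigma^m(x)=\sigma^n(y)\}$; unit space $\Lambda^\infty$. $\mathrm{Stab}(\mathcal{G}_\Lambda)^\wedge$ is the set of pairs $(x,\chi)$, $\chi$ a character of the isotropy group $(\mathcal{G}_\Lambda)^x_x=\{(x,l,x)\}$, with topology having as basis the finite intersections of $\mathcal{O}(U,K,V)=\{(x,\chi):x\in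 U,\ \chi(K\cap(\mathcal{G}_\Lambda)^x_x)\subset V\}$ ($U$ open, $K$ compact in the isotropy bundle, $V\subset\mathbb{T}$ open); $\mathcal{G}_\Lambda$ acts by $g(x,\chi)=(r(g),\chi(g^{-1}\cdot g))$. $q(x,z)=(x,\ (x,l,x)\mapsto z^l)$ with $z^l=\prod_j z_j^{l_j}$. A set $H\subset\Lambda^0$ is hereditary if $r(\lambda)\in H\Rightarrow s(\lambda)\in H$, and saturated if $s(v\Lambda^n)\subset H$ for some $n$ implies $v\in H$. *)

(* Defs.v *)
From Stdlib Require Import Reals ZArith.
From Stdlib Require List.
From mathcomp Require Import all_boot.

Set Implicit Arguments.
Unset Strict Implicit.
Unset Printing Implicit Defensive.

Definition NN (k : nat) := {ffun 'I_k -> nat}.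
Definition zeroNN (k : nat) : NN k := [ffun _ => 0%N].
Definition addNN (k : nat) (m n : NN k) : NN k := [ffun i => (m i + n i)%N].
Definition leNN (k : nat) (m n : NN k) : bool := [forall i, (m i <= n i)%N].

Lemma le0NN (k : nat) (n : NN k) : leNN (zeroNN k) n.
Proof. by apply/forallP => i; rewrite ffunE. Qed.

Lemma leNN_refl (k : nat) (n : NN k) : leNN n n.
Proof. by apply/forallP => i. Qed.

Lemma leNN_add2l (k : nat) (m p q : NN k) : leNN p q -> leNN (addNN m p) (addNN m q).
Proof. by move=> /forallP h; apply/forallP => i; rewrite !ffunE leq_add2l. Qed.

Definition ZZ (k : nat) := {ffun 'I_k -> Z}.
Definition addZZ (k : nat) (a b : ZZ k) : ZZ k := [ffun i => (a i + b i)%Z].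
Definition oppZZ (k : nat) (a : ZZ k) : ZZ k := [ffun i => (- a i)%Z].
Definition diffNN (k : nat) (m n : NN k) : ZZ k :=
  [ffun i => (Z.of_nat (m i) - Z.of_nat (n i))%Z].

Local Open Scope R_scope.

Record circ : Type := Circ {
  cre : R; cim : R;
  cnorm : Rplus (Rmult cre cre) (Rmult cim cim) = R1 }.

Definition cone : circ.
Proof. refine (@Circ 1 0 _). abstract ring. Defined.

Definition cmul (z w : circ) : circ.
Proof.
refine (@Circ (cre z * cre w - cim z * cim w) (cre z * cim w + cim z * cre w) _).
abstract (destruct z as [a b hz]; destruct w as [c d hw]; simpl;
  replace ((a * c - b * d) * (a * c - b * d) + (a * d + b * c) * (a * d + b * c))
    with ((a * a + b * b) * (c * c + d * d)) by ring;
  rewrite hz hw; ring).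
Defined.

Definition cinv (z : circ) : circ.
Proof.
refine (@Circ (cre z) (- cim z) _).
abstract (destruct z as [a b hz]; simpl;
  replace (a * a + - b * - b) with (a * a + b * b) by ring; exact hz).
Defined.

Definition cpowP (z : circ) (p : positive) : circ := Pos.iter (cmul z) cone p.

Definition cpowZ (z : circ) (n : Z) : circ :=
  match n with
  | Z0 => cone
  | Zpos p => cpowP z p
  | Zneg p => cpowP (cinv z) p
  end.

Definition cdist (z w : circ) : R :=
  sqrt ((cre z - cre w) * (cre z - cre w) + (cim z - cim w) * (cim z - cim w)).

Definition open_circ (V : circ -> Prop) : Prop :=
  forall w, V w -> exists eps : R, 0 < eps /\
    forall w', cdist w w' < eps -> V w'.

Local Close Scope R_scope.

Definition torus (k : nat) := 'I_k -> circ.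

Definition zpow (k : nat) (z : torus k) (l : ZZ k) : circ :=
  \big[cmul/cone]_(i < k) cpowZ (z i) (l i).

(* Composition is total with an arbitrary
   value on non-composable pairs; kcomp f g is "f g" (first g, then f),
   defined when kdom f = kcod g. kcod = r (codomain), kdom = s (domain). *)
Record kgraph (k : nat) : Type := KGraph {
  kobj : Type;
  kmor : Type;
  kcod : kmor -> kobj;
  kdom : kmor -> kobj;
  kid : kobj -> kmor;
  kcomp : kmor -> kmor -> kmor;
  kdeg : kmor -> NN k;
  kid_cod : forall v, kcod (kid v) = v;
  kid_dom : forall v, kdom (kid v) = v;
  kcomp_cod : forall f g, kdom f = kcod g -> kcod (kcomp f g) = kcod f;
  kcomp_dom : forall f g, kdom f = kcod g -> kdom (kcomp f g) = kdom g;
  kid_l : forall f, kcomp (kid (kcod f)) f = f;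
  kid_r : forall f, kcomp f (kid (kdom f)) = f;
  kassoc : forall f g h, kdom f = kcod g -> kdom g = kcod h ->
             kcomp f (kcomp g h) = kcomp (kcomp f g) h;
  kdeg_id : forall v, kdeg (kid v) = zeroNN k;
  kdeg_comp : forall f g, kdom f = kcod g ->
             kdeg (kcomp f g) = addNN (kdeg f) (kdeg g);
  kfact : forall (l : kmor) (m n : NN k), kdeg l = addNN m n ->
    exists! mn : kmor * kmor,
      kdom mn.1 = kcod mn.2 /\ kcomp mn.1 mn.2 = l /\
      kdeg mn.1 = m /\ kdeg mn.2 = n;
  kcountable : exists f : kmor -> nat, injective f
}.










(* row-finite without sources: 0 < |v Lambda^n| < infinity *)
Definition row_finite_no_sources (k : nat) (L : kgraph k) : Prop :=
  forall (v : kobj L) (n : NN k),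
    (exists l : kmor L, kcod l = v /\ kdeg l = n) /\
    (exists s : list (kmor L), forall l, kcod l = v -> kdeg l = n -> List.In l s).

Definition hereditary (k : nat) (L : kgraph k) (H : kobj L -> Prop) : Prop :=
  forall l : kmor L, H (kcod l) -> H (kdom l).

Definition saturated (k : nat) (L : kgraph k) (H : kobj L -> Prop) : Prop :=
  forall (v : kobj L) (n : NN k),
    (forall l : kmor L, kcod l = v -> kdeg l = n -> H (kdom l)) -> H v.

(* Infinite paths: degree-preserving functors Omega_k -> Lambda          *)

(* Object p of Omega_k goes to pv p; the morphism (p,q), p <= q, to pm p q _.
   In Omega_k, r(p,q) = p, s(p,q) = q, (p,q)(q,r) = (p,r), d(p,q) = q - p. *)
Record ipath (k : nat) (L : kgraph k) : Type := IPath {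
  pv : NN k -> kobj L;
  pm : forall p q : NN k, leNN p q -> kmor L;
  pm_cod : forall p q (h : leNN p q), kcod (pm h) = pv p;
  pm_dom : forall p q (h : leNN p q), kdom (pm h) = pv q;
  pm_id : forall p (h : leNN p p), pm h = kid (pv p);
  pm_comp : forall p q r (h1 : leNN p q) (h2 : leNN q r) (h3 : leNN p r),
    kcomp (pm h1) (pm h2) = pm h3;
  pm_deg : forall p q (h : leNN p q) i, kdeg (pm h) i = (q i - p i)%N
}.

Definition seg0 (k : nat) (L : kgraph k) (x : ipath L) (n : NN k) : kmor L :=
  pm x (le0NN n).

Definition cyl (k : nat) (L : kgraph k) (l : kmor L) (x : ipath L) : Prop :=
  seg0 x (kdeg l) = l.

Definition open_path (k : nat) (L : kgraph k) (U : ipath L -> Prop) : Prop :=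
  forall x, U x -> exists l : kmor L, cyl l x /\ forall y, cyl l y -> U y.

(* sigma^m(x) = sigma^n(y), written out: both functors agree on all objects
   and morphisms of Omega_k *)
Definition shift_eq (k : nat) (L : kgraph k) (m : NN k) (x : ipath L)
  (n : NN k) (y : ipath L) : Prop :=
  (forall p, pv x (addNN m p) = pv y (addNN n p)) /\
  (forall p q (h : leNN p q),
     pm x (leNN_add2l m h) = pm y (leNN_add2l n h)).

Record gel (k : nat) (L : kgraph k) : Type := GEl {
  grng : ipath L;
  glab : ZZ k;
  gsrc : ipath L
}.

Definition inG (k : nat) (L : kgraph k) (g : gel L) : Prop :=
  exists m n : NN k, glab g = diffNN m n /\ shift_eq m (grng g) n (gsrc g).

Definition Zbasic (k : nat) (L : kgraph k) (U : ipath L -> Prop) (m n : NN k)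
  (V : ipath L -> Prop) (g : gel L) : Prop :=
  U (grng g) /\ V (gsrc g) /\ glab g = diffNN m n /\ shift_eq m (grng g) n (gsrc g).

Definition open_G (k : nat) (L : kgraph k) (W : gel L -> Prop) : Prop :=
  forall g, W g -> exists (U : ipath L -> Prop) (m n : NN k) (V : ipath L -> Prop),
    open_path U /\ open_path V /\ Zbasic U m n V g /\
    forall g', Zbasic U m n V g' -> W g'.

Definition iso_bundle (k : nat) (L : kgraph k) (g : gel L) : Prop :=
  inG g /\ grng g = gsrc g.

Definition compact_iso (k : nat) (L : kgraph k) (K : gel L -> Prop) : Prop :=
  (forall g, K g -> iso_bundle g) /\
  forall (I : Type) (W : I -> gel L -> Prop),
    (forall i, open_G (W i)) ->
    (forall g, K g -> exists i, W i g) ->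
    exists s : list I, forall g, K g -> exists i, List.In i s /\ W i g.

Definition isoL (k : nat) (L : kgraph k) (x : ipath L) (l : ZZ k) : Prop :=
  inG (GEl x l x).

(* A character of (G)^x_x = {(x,l,x)} is represented by the function
   l |-> chi(x,l,x), extended by 1 outside the isotropy labels (so that the
   representation is canonical). *)
Definition is_char (k : nat) (L : kgraph k) (x : ipath L) (chi : ZZ k -> circ) : Prop :=
  (forall l1 l2, isoL x l1 -> isoL x l2 -> chi (addZZ l1 l2) = cmul (chi l1) (chi l2)) /\
  (forall l, ~ isoL x l -> chi l = cone).

Record stab (k : nat) (L : kgraph k) : Type := Stab {
  sx : ipath L;
  schi : ZZ k -> circ;
  schi_ok : is_char sx schi
}.

Definition Obasic (k : nat) (L : kgraph k) (U : ipath L -> Prop) (K : gel L -> Prop)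
  (V : circ -> Prop) (s : stab L) : Prop :=
  U (sx s) /\ forall l, K (GEl (sx s) l (sx s)) -> V (schi s l).

Definition valid_basic (k : nat) (L : kgraph k)
  (b : (ipath L -> Prop) * (gel L -> Prop) * (circ -> Prop)) : Prop :=
  open_path b.1.1 /\ compact_iso b.1.2 /\ open_circ b.2.

Definition in_basics (k : nat) (L : kgraph k)
  (bs : list ((ipath L -> Prop) * (gel L -> Prop) * (circ -> Prop))) (s : stab L) : Prop :=
  forall b, List.In b bs -> Obasic b.1.1 b.1.2 b.2 s.

Definition open_stab (k : nat) (L : kgraph k) (W : stab L -> Prop) : Prop :=
  forall s, W s -> exists bs, (forall b, List.In b bs -> valid_basic b) /\
    in_basics bs s /\ forall s', in_basics bs s' -> W s'.

(* s' = g . s, i.e. s' = (r(g), chi(g^{-1} . g)); here g = (r g, p, s g) and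
   g^{-1}(r g, l, r g) g = (s g, -p + l + p, s g). *)
Definition act_rel (k : nat) (L : kgraph k) (g : gel L) (s s' : stab L) : Prop :=
  gsrc g = sx s /\ sx s' = grng g /\
  forall l, isoL (grng g) l ->
    schi s' l = schi s (addZZ (addZZ (oppZZ (glab g)) l) (glab g)).

Definition G_invariant (k : nat) (L : kgraph k) (W : stab L -> Prop) : Prop :=
  forall (g : gel L) (s s' : stab L), inG g -> act_rel g s s' -> W s -> W s'.

Definition q_rel (k : nat) (L : kgraph k) (x : ipath L) (z : torus k) (s : stab L) : Prop :=
  sx s = x /\ forall l, isoL x l -> schi s l = zpow z l.

Definition q_preimage (k : nat) (L : kgraph k) (W : stab L -> Prop)
  (x : ipath L) (z : torus k) : Prop :=
  exists s, q_rel x z s /\ W s.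

Definition cond_i (k : nat) (L : kgraph k) (D : kobj L * torus k -> Prop) : Prop :=
  forall z : torus k, hereditary (fun v => D (v, z)) /\ saturated (fun v => D (v, z)).

Definition cond_ii (k : nat) (L : kgraph k) (D : kobj L * torus k -> Prop) : Prop :=
  forall (v : kobj L) (z : torus k), D (v, z) ->
  forall x : ipath L, cyl (kid v) x ->
  exists (eps : R) (n : NN k) (mns : list (NN k * NN k)),
    Rlt 0 eps /\
    (forall mn, List.In mn mns -> shift_eq mn.1 x mn.2 x) /\
    forall y : ipath L, cyl (seg0 x n) y ->
      exists m : NN k, forall w : torus k,
        (forall mn, List.In mn mns -> shift_eq mn.1 y mn.2 y ->
           Rlt (cdist (zpow z (diffNN mn.1 mn.2)) (zpow w (diffNN mn.1 mn.2))) eps) ->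
        D (pv y m, w).

Definition D_saturation (k : nat) (L : kgraph k) (D : kobj L * torus k -> Prop)
  (x : ipath L) (z : torus k) : Prop :=
  exists n : NN k, D (pv x n, z).

(* Main.v *)
Require Import Defs.
From Stdlib Require Import Reals ZArith Lra Psatz Lia.
From Stdlib Require Import ProofIrrelevance ClassicalEpsilon Classical FunctionalExtensionality.
From Stdlib Require List.
From HB Require Import structures.
From mathcomp Require Import all_boot.
From mathcomp Require Import zify.

Set Implicit Arguments.
Unset Strict Implicit.
Unset Printing Implicit Defensive.



Lemma circ_eq (z w : circ) : cre z = cre w -> cim z = cim w -> z = w.
Proof.
destruct z as [a b h]; destruct w as [c d h']; simpl => e1 e2.
subst; f_equal; apply proof_irrelevance.
Qed.

Lemma cmulA : associative cmul.
Proof. move=> x y z; apply circ_eq; simpl; ring. Qed.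
Lemma cmulC : commutative cmul.
Proof. move=> x y; apply circ_eq; simpl; ring. Qed.
Lemma cmul1 : left_id cone cmul.
Proof. move=> x; apply circ_eq; simpl; ring. Qed.
Lemma cmulr1 : right_id cone cmul.
Proof. move=> x; apply circ_eq; simpl; ring. Qed.
Lemma cmulV (z : circ) : cmul z (cinv z) = cone.
Proof. destruct z as [a b h]; apply circ_eq; simpl; nra. Qed.
Lemma cmulVl (z : circ) : cmul (cinv z) z = cone.
Proof. by rewrite cmulC cmulV. Qed.

HB.instance Definition _ := Monoid.isComLaw.Build circ cone cmul cmulA cmulC cmul1.

Lemma cinv_mul (z w : circ) : cinv (cmul z w) = cmul (cinv z) (cinv w).
Proof. apply circ_eq; simpl; ring. Qed.
Lemma cinv_one : cinv cone = cone.
Proof. apply circ_eq; simpl; ring. Qed.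
Lemma cinvK (z : circ) : cinv (cinv z) = z.
Proof. apply circ_eq; simpl; ring. Qed.

Definition powN (z : circ) (n : nat) : circ := iter n (cmul z) cone.

Lemma powNS z n : powN z n.+1 = cmul z (powN z n).
Proof. by []. Qed.
Lemma powND z m n : powN z (m + n) = cmul (powN z m) (powN z n).
Proof. elim: m => [|m IH] /=; first by rewrite cmul1. by rewrite /powN /= -/(powN z _) IH cmulA. Qed.
Lemma powN_mul z w n : powN (cmul z w) n = cmul (powN z n) (powN w n).
Proof.
elim: n => [|n IH]; first by rewrite /= cmul1.
rewrite !powNS IH. rewrite -!cmulA; congr cmul. rewrite !cmulA; congr cmul; apply cmulC.
Qed.
Lemma powN_inv z n : powN (cinv z) n = cinv (powN z n).
Proof. elim: n => [|n IH]; first by rewrite /= cinv_one. by rewrite !powNS IH cinv_mul. Qed.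
Lemma powNM z m n : powN z (m * n) = powN (powN z m) n.
Proof.
elim: n => [|n IH]; first by rewrite muln0.
by rewrite mulnS powND IH powNS.
Qed.
Lemma powN1 n : powN cone n = cone.
Proof. elim: n => [|n IH] //; by rewrite powNS IH cmul1. Qed.

Lemma cpowP_powN z p : cpowP z p = powN z (Pos.to_nat p).
Proof.
rewrite /cpowP Pos2Nat.inj_iter /powN.
by [].
Qed.

Lemma cpowZ_nat z (n : nat) : cpowZ z (Z.of_nat n) = powN z n.
Proof. case: n => [|n] //=. by rewrite cpowP_powN SuccNat2Pos.id_succ. Qed.
Lemma cpowZ_negnat z (n : nat) : cpowZ z (- Z.of_nat n) = cinv (powN z n).
Proof.
case: n => [|n] /=; first by rewrite cinv_one.
by rewrite cpowP_powN SuccNat2Pos.id_succ powN_inv.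
Qed.

Lemma Z_cases (a : Z) : exists n : nat, a = Z.of_nat n \/ a = (- Z.of_nat n)%Z.
Proof. exists (Z.abs_nat a); lia. Qed.

Lemma powN_sub z m n : (n <= m)%N -> powN z (m - n) = cmul (powN z m) (cinv (powN z n)).
Proof.
move=> h. have -> : powN z m = powN z ((m - n) + n) by rewrite subnK.
by rewrite powND -cmulA cmulV cmulr1.
Qed.

Lemma cpowZ_add z a b : cpowZ z (a + b) = cmul (cpowZ z a) (cpowZ z b).
Proof.
have key : forall m n : nat, cpowZ z (Z.of_nat m - Z.of_nat n) = cmul (powN z m) (cinv (powN z n)).
  move=> m n; case: (leqP n m) => h.
    rewrite -Nat2Z.inj_sub; last by apply/leP.
    by rewrite cpowZ_nat minusE powN_sub.
  have h' : (m <= n)%N by apply: ltnW.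
  have -> : (Z.of_nat m - Z.of_nat n = - Z.of_nat (n - m))%Z.
    rewrite -minusE Nat2Z.inj_sub; [lia| by apply/leP].
  rewrite cpowZ_negnat powN_sub // cinv_mul cinvK cmulC //.
have [m [->|->]] := Z_cases a; have [n [->|->]] := Z_cases b.
- by rewrite -Nat2Z.inj_add !cpowZ_nat powND.
- by rewrite -Z.sub_opp_r Z.opp_involutive key cpowZ_nat cpowZ_negnat.
- rewrite Z.add_comm. rewrite -Z.sub_opp_r Z.opp_involutive key cpowZ_nat cpowZ_negnat. apply cmulC.
- rewrite -Z.opp_add_distr -Nat2Z.inj_add !cpowZ_negnat powND cinv_mul //.
Qed.

Lemma cpowZ0 z : cpowZ z 0 = cone. Proof. by []. Qed.
Lemma cpowZ1 z : cpowZ z 1 = z. Proof. by rewrite /= /cpowP /= cmulr1. Qed.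

Lemma cpowZ_opp z a : cpowZ z (- a) = cinv (cpowZ z a).
Proof.
have h := cpowZ_add z a (- a). rewrite Z.add_opp_diag_r cpowZ0 in h.
have : cmul (cinv (cpowZ z a)) cone = cmul (cinv (cpowZ z a)) (cmul (cpowZ z a) (cpowZ z (- a))) by rewrite h.
by rewrite cmulr1 cmulA cmulVl cmul1 => ->.
Qed.

Lemma cpowZ_mul z w a : cpowZ (cmul z w) a = cmul (cpowZ z a) (cpowZ w a).
Proof.
have [n [->|->]] := Z_cases a.
  by rewrite !cpowZ_nat powN_mul.
by rewrite !cpowZ_negnat powN_mul cinv_mul.
Qed.

Lemma cpowZ_one a : cpowZ cone a = cone.
Proof. have [n [->|->]] := Z_cases a; by rewrite ?cpowZ_nat ?cpowZ_negnat powN1 ?cinv_one. Qed.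

Lemma cpowZ_cpowZ z a b : cpowZ (cpowZ z a) b = cpowZ z (a * b).
Proof.
have gen : forall (y : circ) (n : nat) (b : Z), cpowZ (powN y n) b = cpowZ y (Z.of_nat n * b).
  move=> y n b0; have [m [->|->]] := Z_cases b0.
    by rewrite -Nat2Z.inj_mul !cpowZ_nat powNM.
  by rewrite Z.mul_opp_r -Nat2Z.inj_mul !cpowZ_negnat powNM.
have [n [->|->]] := Z_cases a.
  by rewrite cpowZ_nat gen.
rewrite cpowZ_negnat -powN_inv gen Z.mul_opp_l cpowZ_opp.
have h := cpowZ_mul (cinv z) z (Z.of_nat n * b).
rewrite cmulVl cpowZ_one in h.
have : cmul (cinv (cpowZ z (Z.of_nat n * b))) cone =
  cmul (cinv (cpowZ z (Z.of_nat n * b))) (cmul (cpowZ (cinv z) (Z.of_nat n * b)) (cpowZ z (Z.of_nat n * b))) by rewrite h.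
by rewrite cmulr1 (cmulC (cpowZ (cinv z) _)) cmulA cmulVl cmul1 => ->.
Qed.


Lemma zpow_add k (z : torus k) (a b : ZZ k) :
  zpow z (addZZ a b) = cmul (zpow z a) (zpow z b).
Proof.
rewrite /zpow -big_split /=. apply: eq_bigr => i _. by rewrite ffunE cpowZ_add.
Qed.

Definition zeroZZ k : ZZ k := [ffun _ => 0%Z].
Lemma zpow0 k (z : torus k) : zpow z (zeroZZ k) = cone.
Proof. rewrite /zpow big1 // => i _; by rewrite ffunE. Qed.

Lemma zpow_one k (l : ZZ k) : zpow (fun _ => cone) l = cone.
Proof. rewrite /zpow big1 // => i _; by rewrite cpowZ_one. Qed.

Local Open Scope R_scope.

Lemma ang_norm (t : R) : cos t * cos t + sin t * sin t = 1.
Proof. have := sin2_cos2 t; rewrite /Rsqr; lra. Qed.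
Definition ang (t : R) : circ := @Circ (cos t) (sin t) (ang_norm t).

Lemma ang_mul x y : cmul (ang x) (ang y) = ang (x + y).
Proof. apply circ_eq; simpl; rewrite ?cos_plus ?sin_plus; ring. Qed.

Lemma powN_ang x n : powN (ang x) n = ang (INR n * x).
Proof.
elim: n => [|n IH].
  apply circ_eq; simpl; rewrite Rmult_0_l ?cos_0 ?sin_0 //.
rewrite powNS IH ang_mul S_INR; f_equal; ring.
Qed.

Lemma circ_ang (c : circ) : exists t, c = ang t.
Proof.
destruct c as [a b h].
have ha : -1 <= a <= 1 by nra.
case: (Rle_dec 0 b) => hb.
- exists (acos a); apply circ_eq; simpl; first by rewrite cos_acos.
  rewrite sin_acos // /Rsqr.
  have -> : 1 - a * a = b * b by lra.
  by rewrite sqrt_square.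
- exists (- acos a); apply circ_eq; simpl; first by rewrite cos_neg cos_acos.
  rewrite sin_neg sin_acos // /Rsqr.
  have -> : 1 - a * a = (-b) * (-b) by lra.
  rewrite sqrt_square; lra.
Qed.

Lemma circ_root (c : circ) (d : nat) : (0 < d)%N -> exists t, powN t d = c.
Proof.
move=> hd; have [th ->] := circ_ang c.
exists (ang (th / INR d)); rewrite powN_ang; f_equal.
field. apply not_0_INR. by case: d hd.
Qed.

Lemma norm_tri (x1 y1 x2 y2 : R) :
  sqrt ((x1 + x2) * (x1 + x2) + (y1 + y2) * (y1 + y2)) <=
  sqrt (x1 * x1 + y1 * y1) + sqrt (x2 * x2 + y2 * y2).
Proof.
set s1 := sqrt (x1 * x1 + y1 * y1); set s2 := sqrt (x2 * x2 + y2 * y2).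
have p1 : 0 <= x1 * x1 + y1 * y1 by nra.
have p2 : 0 <= x2 * x2 + y2 * y2 by nra.
have e1 : s1 * s1 = x1 * x1 + y1 * y1 by apply sqrt_sqrt.
have e2 : s2 * s2 = x2 * x2 + y2 * y2 by apply sqrt_sqrt.
have g1 : 0 <= s1 by apply sqrt_pos.
have g2 : 0 <= s2 by apply sqrt_pos.
have cs : x1 * x2 + y1 * y2 <= s1 * s2.
  have q : (x1 * x2 + y1 * y2) * (x1 * x2 + y1 * y2) <= (s1 * s2) * (s1 * s2).
    have -> : (s1 * s2) * (s1 * s2) = (s1 * s1) * (s2 * s2) by ring.
    rewrite e1 e2. have := Rle_0_sqr (x1*y2 - x2*y1); rewrite /Rsqr => hh; nra.
  have g : 0 <= s1 * s2 by nra.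
  nra.
have -> : s1 + s2 = sqrt ((s1 + s2) * (s1 + s2)) by rewrite sqrt_square; lra.
apply sqrt_le_1_alt. nra.
Qed.

Lemma cdist_tri a b c : cdist a c <= cdist a b + cdist b c.
Proof.
rewrite /cdist.
have := norm_tri (cre a - cre b) (cim a - cim b) (cre b - cre c) (cim b - cim c).
have -> : cre a - cre b + (cre b - cre c) = cre a - cre c by ring.
have -> : cim a - cim b + (cim b - cim c) = cim a - cim c by ring.
done.
Qed.

Lemma cdist_sym a b : cdist a b = cdist b a.
Proof. rewrite /cdist; f_equal; ring. Qed.

Lemma cdist_refl a : cdist a a = 0.
Proof. rewrite /cdist !Rminus_diag_eq // Rmult_0_l Rplus_0_l; apply sqrt_0. Qed.

Lemma cdist_ge0 a b : 0 <= cdist a b.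
Proof. apply sqrt_pos. Qed.

Lemma ball_open (c : circ) (e : R) : open_circ (fun w => cdist c w < e).
Proof.
move=> w hw. exists (e - cdist c w); split; first lra.
move=> w' h. have := cdist_tri c w w'. lra.
Qed.


Lemma cmulACA a b c d : cmul (cmul a b) (cmul c d) = cmul (cmul a c) (cmul b d).
Proof. by rewrite -!cmulA (cmulA b) (cmulC b) -cmulA. Qed.

Section Ext.
Variable k : nat.

Definition scZZ (c : Z) (v : ZZ k) : ZZ k := [ffun i => (c * v i)%Z].

Lemma zzE (a b : ZZ k) : (forall i, a i = b i) -> a = b.
Proof. by move=> h; apply/ffunP. Qed.

Definition subgrp (S : ZZ k -> Prop) :=
  S (zeroZZ k) /\ (forall a b, S a -> S b -> S (addZZ a b)) /\ (forall a, S a -> S (oppZZ a)).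
Definition homS (S : ZZ k -> Prop) (chi : ZZ k -> circ) :=
  forall a b, S a -> S b -> chi (addZZ a b) = cmul (chi a) (chi b).

Lemma cancel_l (a b c : circ) : cmul a b = cmul a c -> b = c.
Proof.
move=> h; have : cmul (cinv a) (cmul a b) = cmul (cinv a) (cmul a c) by rewrite h.
by rewrite !cmulA cmulVl !cmul1.
Qed.

Lemma homS0 S chi : subgrp S -> homS S chi -> chi (zeroZZ k) = cone.
Proof.
move=> [h0 _] hh. have e : addZZ (zeroZZ k) (zeroZZ k) = zeroZZ k by apply zzE => i; rewrite !ffunE.
have := hh _ _ h0 h0; rewrite e => h. apply: (@cancel_l (chi (zeroZZ k))). by rewrite -h cmulr1.
Qed.

Lemma homSopp S chi a : subgrp S -> homS S chi -> S a -> chi (oppZZ a) = cinv (chi a).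
Proof.
move=> hS hh ha. have [_ [_ hop]] := hS.
have e : addZZ a (oppZZ a) = zeroZZ k by apply zzE => i; rewrite !ffunE; lia.
have := hh _ _ ha (hop _ ha); rewrite e (homS0 hS hh) => h.
apply: (@cancel_l (chi a)). by rewrite -h cmulV.
Qed.

Lemma sc_nat_S (n : nat) v : scZZ (Z.of_nat n.+1) v = addZZ (scZZ (Z.of_nat n) v) v.
Proof. apply zzE => i; rewrite !ffunE; lia. Qed.

Lemma homS_sc S chi a c : subgrp S -> homS S chi -> S a ->
  S (scZZ c a) /\ chi (scZZ c a) = cpowZ (chi a) c.
Proof.
move=> hS hh ha. have [h0 [hadd hop]] := hS.
have nat_case : forall n : nat, S (scZZ (Z.of_nat n) a) /\ chi (scZZ (Z.of_nat n) a) = powN (chi a) n.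
  elim=> [|n [IH1 IH2]].
    have -> : scZZ (Z.of_nat 0) a = zeroZZ k by apply zzE => i; rewrite !ffunE.
    by split => //; rewrite (homS0 hS hh).
  rewrite sc_nat_S; split; first by apply hadd.
  by rewrite hh // IH2 powNS cmulC.
have [n [->|->]] := Z_cases c.
  by rewrite cpowZ_nat.
have -> : scZZ (- Z.of_nat n) a = oppZZ (scZZ (Z.of_nat n) a) by apply zzE => i; rewrite !ffunE; lia.
have [h1 h2] := nat_case n.
split; first by apply hop.
by rewrite cpowZ_negnat (homSopp hS hh h1) h2.
Qed.

Lemma min_exists (P : nat -> Prop) : (exists n, P n) -> exists n, P n /\ forall m, P m -> (n <= m)%N.
Proof.
move=> [n hn]. apply: NNPP => hno.
have : forall N m, (m <= N)%N -> ~ P m.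
  elim=> [|N IH] m hm hPm.
    apply: hno; exists m; split => // m' _. by move: hm; rewrite leqn0 => /eqP ->.
  apply: hno; exists m; split => // m' hm'.
  case: (leqP m m') => // hlt. exfalso. apply: (IH m' _ hm'). by rewrite -ltnS (leq_trans hlt hm).
by move=> /(_ n n (leqnn n)).
Qed.

Definition Sext (S : ZZ k -> Prop) (v : ZZ k) (u : ZZ k) :=
  exists s j, S s /\ u = addZZ s (scZZ j v).

Lemma subgrp_ext S v : subgrp S -> subgrp (Sext S v).
Proof.
move=> [h0 [hadd hop]]; split; [|split].
- exists (zeroZZ k), 0%Z; split => //; apply zzE => i; rewrite !ffunE; lia.
- move=> a b [s1 [j1 [h1 ->]]] [s2 [j2 [h2 ->]]].
  exists (addZZ s1 s2), (j1 + j2)%Z; split; first by apply hadd.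
  apply zzE => i; rewrite !ffunE; lia.
- move=> a [s1 [j1 [h1 ->]]]. exists (oppZZ s1), (- j1)%Z; split; first by apply hop.
  apply zzE => i; rewrite !ffunE; lia.
Qed.

Lemma divisor_exists S v : subgrp S ->
  exists d : nat, forall j : Z, S (scZZ j v) <-> Z.divide (Z.of_nat d) j.
Proof.
move=> hS; have [h0 [hadd hop]] := hS.
have Sscl : forall a c, S a -> S (scZZ c a).
  move=> a c ha. (* via homS with trivial chi *)
  have hh : homS S (fun _ => cone) by move=> ? ? _ _; rewrite cmul1.
  by have [] := homS_sc c hS hh ha.
have sc_sc : forall c d, scZZ c (scZZ d v) = scZZ (c * d) v.
  by move=> c d; apply zzE => i; rewrite !ffunE; lia.
case: (classic (exists n : nat, (0 < n)%N /\ S (scZZ (Z.of_nat n) v))) => [hex|hno].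
- have [d [[hd0 hdS] hmin]] := min_exists hex.
  exists d => j; split.
  + move=> hj. have hdz : (0 < Z.of_nat d)%Z by move/ltP: hd0; lia.
    have [hr1 hr2] := Z.mod_pos_bound j (Z.of_nat d) hdz.
    have ej := Z.div_mod j (Z.of_nat d) ltac:(lia).
    set q := (j / Z.of_nat d)%Z in ej hr1 hr2; set r := (j mod Z.of_nat d)%Z in ej hr1 hr2.
    have hrS : S (scZZ r v).
      have -> : scZZ r v = addZZ (scZZ j v) (oppZZ (scZZ q (scZZ (Z.of_nat d) v))).
        apply zzE => i; rewrite !ffunE. rewrite {1}ej. lia.
      apply hadd => //; apply hop; apply Sscl => //.
    case: (Z.eq_dec r 0) => hr0.
      exists q; lia.
    exfalso. have := hmin (Z.to_nat r). rewrite Z2Nat.id; last lia.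
    move=> /(_ (conj _ hrS)) h. have : (d <= Z.to_nat r)%N by apply h; apply/ltP; lia.
    move/leP; lia.
  + move=> [c ->]. rewrite -sc_sc. by apply Sscl.
- exists 0%N => j; split.
  + move=> hj; exists 0%Z. case: (Z.eq_dec j 0) => hj0; first lia.
    exfalso; apply: hno.
    case: (Z_lt_le_dec 0 j) => hjp.
      exists (Z.to_nat j); rewrite Z2Nat.id; last lia. split => //; apply/ltP; lia.
    exists (Z.to_nat (- j)); rewrite Z2Nat.id; last lia. split; first by apply/ltP; lia.
    have -> : scZZ (- j) v = oppZZ (scZZ j v) by apply zzE => i; rewrite !ffunE; lia.
    by apply hop.
  + move=> [c ->]. have -> : scZZ (c * Z.of_nat 0) v = zeroZZ k by apply zzE => i; rewrite !ffunE; lia.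
    done.
Qed.

Lemma ext_step S chi v : subgrp S -> homS S chi ->
  exists chi', homS (Sext S v) chi' /\ forall s, S s -> chi' s = chi s.
Proof.
move=> hS hh. have [h0 [hadd hop]] := hS.
have [d hd] := divisor_exists v hS.
have [t ht] : exists t, cpowZ t (Z.of_nat d) = chi (scZZ (Z.of_nat d) v).
  case: d hd => [|d] hd.
    exists cone. rewrite cpowZ0. have -> : scZZ (Z.of_nat 0) v = zeroZZ k by apply zzE => i; rewrite !ffunE; lia.
    by rewrite (homS0 hS hh).
  have [t ht] := circ_root (chi (scZZ (Z.of_nat d.+1) v)) (ltn0Sn d).
  by exists t; rewrite cpowZ_nat.
have wd : forall s s' j j', S s -> S s' -> addZZ s (scZZ j v) = addZZ s' (scZZ j' v) ->
    cmul (chi s) (cpowZ t j) = cmul (chi s') (cpowZ t j').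
  move=> s s' j j' hs hs' e.
  have e2 : scZZ (j - j') v = addZZ s' (oppZZ s).
    apply zzE => i; have := congr1 (fun f : ZZ k => f i) e; rewrite !ffunE /= => ei. nia.
  have hjS : S (scZZ (j - j') v) by rewrite e2; apply hadd => //; apply hop.
  have [c hc] := (proj1 (hd _) hjS).
  have e3 : s' = addZZ s (scZZ c (scZZ (Z.of_nat d) v)).
    apply zzE => i; have := congr1 (fun f : ZZ k => f i) e2; rewrite !ffunE /= hc => ei. nia.
  have hdv : S (scZZ (Z.of_nat d) v) by apply (proj2 (hd _)); exists 1%Z; lia.
  have [hcs hcc] := homS_sc c hS hh hdv.
  rewrite e3 hh // hcc -ht cpowZ_cpowZ -cmulA -cpowZ_add. congr (cmul _ (cpowZ t _)). lia.
pose P u := exists p : ZZ k * Z, S p.1 /\ u = addZZ p.1 (scZZ p.2 v).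
pose chi' u := match excluded_middle_informative (P u) with
  | left h => let p := proj1_sig (constructive_indefinite_description _ h) in cmul (chi p.1) (cpowZ t p.2)
  | right _ => cone end.
have spec : forall s j, S s -> chi' (addZZ s (scZZ j v)) = cmul (chi s) (cpowZ t j).
  move=> s j hs. rewrite /chi'. case: excluded_middle_informative => h; last first.
    by exfalso; apply h; exists (s, j).
  case: constructive_indefinite_description => [[s1 j1] [/= h1 e1]] /=.
  by apply wd.
exists chi'; split.
- move=> a b [s1 [j1 [h1 ->]]] [s2 [j2 [h2 ->]]].
  have -> : addZZ (addZZ s1 (scZZ j1 v)) (addZZ s2 (scZZ j2 v)) = addZZ (addZZ s1 s2) (scZZ (j1 + j2) v).
    apply zzE => i; rewrite !ffunE; lia.
  rewrite !spec //; last by apply hadd.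
  by rewrite hh // cpowZ_add cmulACA.
- move=> s hs. have e : addZZ s (scZZ 0 v) = s by apply zzE => i; rewrite !ffunE; lia.
  by rewrite -{1}e spec // cpowZ0 cmulr1.
Qed.

Definition eZZ (i : 'I_k) : ZZ k := [ffun i' => if i' == i then 1%Z else 0%Z].

Lemma ext_iter S chi : subgrp S -> homS S chi -> forall j, (j <= k)%N ->
  exists S' chi', subgrp S' /\ homS S' chi' /\ (forall s, S s -> S' s /\ chi' s = chi s) /\
    (forall i : 'I_k, (i < j)%N -> S' (eZZ i)).
Proof.
move=> hS hh; elim=> [|j IH] hj.
  exists S, chi; do 3 split => //. 
have [S' [chi' [hS' [hh' [hsub hE]]]]] := IH (ltnW hj).
have [chi'' [hh'' hag]] := ext_step (eZZ (Ordinal hj)) hS' hh'.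
exists (Sext S' (eZZ (Ordinal hj))), chi''; split; first by apply subgrp_ext.
split => //; split.
  move=> s hs; have [h1 h2] := hsub s hs.
  have hin : Sext S' (eZZ (Ordinal hj)) s.
    exists s, 0%Z; split => //; apply zzE => i; rewrite !ffunE; lia.
  by split => //; rewrite hag.
move=> i hi. rewrite ltnS leq_eqVlt in hi. case/orP: hi => hi.
  exists (zeroZZ k), 1%Z; split; first by case: hS'.
  apply zzE => i'; rewrite !ffunE. have -> : i = Ordinal hj by apply: val_inj; apply/eqP.
  lia.
exists (eZZ i), 0%Z; split; first by apply hE.
apply zzE => i'; rewrite !ffunE; lia.
Qed.

Lemma zpow_e (z : torus k) (i : 'I_k) c : zpow z (scZZ c (eZZ i)) = cpowZ (z i) c.
Proof.
rewrite /zpow (bigD1 i) //= big1 ?cmulr1; first by rewrite !ffunE eqxx Z.mul_1_r.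
move=> i' hi'; rewrite !ffunE (negbTE hi') Z.mul_0_r; by [].
Qed.

Lemma char_extension S chi : subgrp S -> homS S chi ->
  exists z : torus k, forall l, S l -> chi l = zpow z l.
Proof.
move=> hS hh.
have [S' [chi' [hS' [hh' [hsub hE]]]]] := ext_iter hS hh (leqnn k).
exists (fun i => chi' (eZZ i)) => l hl.
have [_ <-] := hsub l hl.
pose tr (j : nat) : ZZ k := [ffun i : 'I_k => if (i < j)%N then l i else 0%Z].
have key : forall j, (j <= k)%N -> S' (tr j) /\ chi' (tr j) = zpow (fun i => chi' (eZZ i)) (tr j).
  elim=> [|j IH] hj.
    have -> : tr 0%N = zeroZZ k by apply zzE => i; rewrite !ffunE.
    by split; [case: hS'|rewrite zpow0 (homS0 hS' hh')].
  have [IH1 IH2] := IH (ltnW hj).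
  have -> : tr j.+1 = addZZ (tr j) (scZZ (l (Ordinal hj)) (eZZ (Ordinal hj))).
    apply zzE => i; rewrite !ffunE ltnS leq_eqVlt.
    case: (eqVneq i (Ordinal hj)) => [->|hne] /=.
      rewrite eqxx ltnn /=; lia.
    have hne' : (nat_of_ord i == j) = false.
      apply/negbTE; apply: contra hne => /eqP h; apply/eqP; apply: val_inj.
      done.
    rewrite hne' /=. case: (i < j)%N; lia.
  have [hs1 hs2] := homS_sc (l (Ordinal hj)) hS' hh' (hE (Ordinal hj) hj).
  split; first by case: hS' => _ [hadd _]; apply hadd.
  by rewrite hh' // zpow_add IH2 hs2 zpow_e.
have -> : l = tr k by apply zzE => i; rewrite !ffunE ltn_ord.
by case: (key k (leqnn k)).
Qed.
End Ext.


Section NNarith.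
Variable k : nat.
Lemma nnE (a b : NN k) : (forall i, a i = b i) -> a = b.
Proof. by move=> h; apply/ffunP. Qed.
Definition subNN (m n : NN k) : NN k := [ffun i => (m i - n i)%N].
Definition scNN (j : nat) : NN k := [ffun _ => j].
Lemma leNNP (m n : NN k) : leNN m n <-> forall i, (m i <= n i)%N.
Proof. split; [by move/forallP | by move=> h; apply/forallP]. Qed.
Lemma leNN_trans (a b c : NN k) : leNN a b -> leNN b c -> leNN a c.
Proof. move=> /leNNP h1 /leNNP h2; apply/leNNP => i; exact: leq_trans (h1 i) (h2 i). Qed.
Lemma leNN_addr (a b : NN k) : leNN a (addNN a b).
Proof. apply/leNNP => i; rewrite ffunE; apply leq_addr. Qed.
Lemma leNN_addl (a b : NN k) : leNN a (addNN b a).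
Proof. apply/leNNP => i; rewrite ffunE; apply leq_addl. Qed.
Lemma addNNA (a b c : NN k) : addNN a (addNN b c) = addNN (addNN a b) c.
Proof. apply nnE => i; rewrite !ffunE; lia. Qed.
Lemma addNNC (a b : NN k) : addNN a b = addNN b a.
Proof. apply nnE => i; rewrite !ffunE; lia. Qed.
Lemma add0NN (a : NN k) : addNN (zeroNN k) a = a.
Proof. apply nnE => i; rewrite !ffunE; lia. Qed.
Lemma addNN0 (a : NN k) : addNN a (zeroNN k) = a.
Proof. apply nnE => i; rewrite !ffunE; lia. Qed.
Lemma subNNK (a b : NN k) : leNN a b -> addNN a (subNN b a) = b.
Proof. move/leNNP=> h; apply nnE => i; rewrite !ffunE; have := h i; lia. Qed.
Lemma addNNK (a b : NN k) : subNN (addNN a b) a = b.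
Proof. apply nnE => i; rewrite !ffunE; lia. Qed.
Definition maxc (q : NN k) : nat := \max_(i < k) q i.
Lemma le_maxc (q : NN k) : leNN q (scNN (maxc q)).
Proof. apply/leNNP => i; rewrite ffunE /maxc. exact: (leq_bigmax i). Qed.
Lemma le_scNN (a b : nat) : (a <= b)%N -> leNN (scNN a) (scNN b).
Proof. by move=> h; apply/leNNP => i; rewrite !ffunE. Qed.
Lemma le_sc_add (D : NN k) (q : NN k) (j : nat) : leNN q (scNN j) -> leNN q (addNN D (scNN j)).
Proof. move=> h; apply: leNN_trans h _; apply leNN_addl. Qed.
Lemma leNN_antisym (a b : NN k) : leNN a b -> leNN b a -> a = b.
Proof. move=> /leNNP h1 /leNNP h2; apply nnE => i; apply/eqP; rewrite eqn_leq h1 h2. done. Qed.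
Lemma leNN_add2r (a b c : NN k) : leNN a b -> leNN (addNN a c) (addNN b c).
Proof. move=> /leNNP h; apply/leNNP => i; rewrite !ffunE leq_add2r. apply h. Qed.
Lemma leNN_add (a b c d : NN k) : leNN a b -> leNN c d -> leNN (addNN a c) (addNN b d).
Proof. move=> /leNNP h /leNNP h'; apply/leNNP => i; rewrite !ffunE; apply leq_add; [apply h|apply h']. Qed.
Definition maxNN (a b : NN k) : NN k := [ffun i => maxn (a i) (b i)].
Lemma le_maxNNl (a b : NN k) : leNN a (maxNN a b).
Proof. apply/leNNP => i; rewrite ffunE; apply leq_maxl. Qed.
Lemma le_maxNNr (a b : NN k) : leNN b (maxNN a b).
Proof. apply/leNNP => i; rewrite ffunE; apply leq_maxr. Qed.
End NNarith.

Section KG.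
Variables (k : nat) (L : kgraph k).
Local Notation mor := (kmor L).
Local Notation obj := (kobj L).

Lemma kdeg0 (l : mor) : kdeg l = zeroNN k -> l = kid (kcod l).
Proof.
move=> h.
have e : kdeg l = addNN (zeroNN k) (zeroNN k) by rewrite h add0NN.
have [[a b] [_ U]] := kfact e.
have u1 := U (kid (kcod l), l). have u2 := U (l, kid (kdom l)).
rewrite /= in u1 u2.
have h1 := u1 (conj (kid_dom _) (conj (kid_l l) (conj (kdeg_id _) h))).
have h2 := u2 (conj (esym (kid_cod _)) (conj (kid_r l) (conj h (kdeg_id _)))).
by rewrite h1 in h2; case: h2 => ->.
Qed.

Lemma fac_ex (l : mor) (m : NN k) : leNN m (kdeg l) ->
  exists mn : mor * mor, kdom mn.1 = kcod mn.2 /\ kcomp mn.1 mn.2 = l /\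
      kdeg mn.1 = m /\ kdeg mn.2 = subNN (kdeg l) m.
Proof.
move=> h. have e : kdeg l = addNN m (subNN (kdeg l) m) by rewrite subNNK.
by have [mn [H _]] := kfact e; exists mn.
Qed.

Definition fac (l : mor) (m : NN k) : mor * mor :=
  match @idP (leNN m (kdeg l)) with
  | ReflectT h => proj1_sig (constructive_indefinite_description _ (fac_ex h))
  | ReflectF _ => (kid (kcod l), l) end.
Definition pre l m := (fac l m).1.
Definition suf l m := (fac l m).2.

Lemma fac_spec l m : leNN m (kdeg l) ->
  kdom (pre l m) = kcod (suf l m) /\ kcomp (pre l m) (suf l m) = l /\
  kdeg (pre l m) = m /\ kdeg (suf l m) = subNN (kdeg l) m.
Proof.
move=> h; rewrite /pre /suf /fac; destruct (@idP (leNN m (kdeg l))) as [h'|h']; last by [].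
by case: constructive_indefinite_description.
Qed.

Lemma fac_uniq l (a b : mor) : kdom a = kcod b -> kcomp a b = l ->
  pre l (kdeg a) = a /\ suf l (kdeg a) = b.
Proof.
move=> hab hl.
have hd : kdeg l = addNN (kdeg a) (kdeg b) by rewrite -hl kdeg_comp.
have hle : leNN (kdeg a) (kdeg l) by rewrite hd leNN_addr.
have [s1 [s2 [s3 s4]]] := fac_spec hle.
have e : kdeg l = addNN (kdeg a) (kdeg b) := hd.
have [[a0 b0] [_ U]] := kfact e.
have ua := U (a, b) (conj hab (conj hl (conj erefl erefl))).
have ub := U (pre l (kdeg a), suf l (kdeg a)).
rewrite /= in ub. have ub' := ub (conj s1 (conj s2 (conj s3 _))).
rewrite s4 hd addNNK in ub'. have := ub' erefl. rewrite ua. by case => <- <-.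
Qed.

Lemma pre_cod l m : leNN m (kdeg l) -> kcod (pre l m) = kcod l.
Proof. move=> h; have [s1 [s2 _]] := fac_spec h. by rewrite -{2}s2 kcomp_cod. Qed.
Lemma suf_dom l m : leNN m (kdeg l) -> kdom (suf l m) = kdom l.
Proof. move=> h; have [s1 [s2 _]] := fac_spec h. by rewrite -{2}s2 kcomp_dom. Qed.
Lemma pre_deg l m : leNN m (kdeg l) -> kdeg (pre l m) = m.
Proof. by move=> h; have [_ [_ [s3 _]]] := fac_spec h. Qed.

Lemma pre_comp (a b : mor) : kdom a = kcod b -> pre (kcomp a b) (kdeg a) = a.
Proof. by move=> h; have [] := fac_uniq h erefl. Qed.
Lemma suf_comp (a b : mor) : kdom a = kcod b -> suf (kcomp a b) (kdeg a) = b.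
Proof. by move=> h; have [] := fac_uniq h erefl. Qed.

Lemma pre_full l : pre l (kdeg l) = l.
Proof.
have h : kdom l = kcod (kid (kdom l)) by rewrite kid_cod.
have := pre_comp h. by rewrite kid_r.
Qed.
Lemma suf_zero l : suf l (zeroNN k) = l.
Proof.
have h : kdom (kid (kcod l)) = kcod l by rewrite kid_dom.
have := suf_comp h. by rewrite kid_l kdeg_id.
Qed.

Lemma pre_pre l m m' : leNN m' m -> leNN m (kdeg l) ->
  pre (pre l m) m' = pre l m' /\ suf l m' = kcomp (suf (pre l m) m') (suf l m).
Proof.
move=> h1 h2.
have [s1 [s2 [s3 s4]]] := fac_spec h2.
have h1' : leNN m' (kdeg (pre l m)) by rewrite s3.
have [t1 [t2 [t3 t4]]] := fac_spec h1'.
have dA2 : kdom (suf (pre l m) m') = kcod (suf l m) by rewrite suf_dom.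
have e : l = kcomp (pre (pre l m) m') (kcomp (suf (pre l m) m') (suf l m)).
  by rewrite kassoc // t2 s2.
have hd : kdom (pre (pre l m) m') = kcod (kcomp (suf (pre l m) m') (suf l m)).
  by rewrite kcomp_cod.
have [u1 u2] := fac_uniq hd (esym e).
rewrite t3 in u1 u2. by rewrite u1 u2.
Qed.

Lemma suf_split l p q : leNN p q -> leNN q (kdeg l) ->
  suf l p = kcomp (suf (pre l q) p) (suf l q).
Proof. by move=> h1 h2; have [] := pre_pre h1 h2. Qed.

Lemma suf_deg l m : leNN m (kdeg l) -> kdeg (suf l m) = subNN (kdeg l) m.
Proof. by move=> h; have [_ [_ [_ s4]]] := fac_spec h. Qed.
Lemma suf_cod l m : leNN m (kdeg l) -> kcod (suf l m) = kdom (pre l m).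
Proof. by move=> h; have [s1 _] := fac_spec h. Qed.

Lemma pm_irr (x : ipath L) p q (h1 h2 : leNN p q) : pm x h1 = pm x h2.
Proof. by rewrite (bool_irrelevance h1 h2). Qed.

Definition PM (x : ipath L) p q : mor :=
  match @idP (leNN p q) with ReflectT h => pm x h | ReflectF _ => kid (pv x p) end.

Lemma PM_pm x p q (h : leNN p q) : PM x p q = pm x h.
Proof. rewrite /PM; destruct (@idP (leNN p q)) as [h'|h'] => //. exact: pm_irr. Qed.

Lemma PM_cod x p q : leNN p q -> kcod (PM x p q) = pv x p.
Proof. by move=> h; rewrite (PM_pm x h) pm_cod. Qed.
Lemma PM_dom x p q : leNN p q -> kdom (PM x p q) = pv x q.
Proof. by move=> h; rewrite (PM_pm x h) pm_dom. Qed.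
Lemma PM_id x p : PM x p p = kid (pv x p).
Proof. by rewrite (PM_pm x (leNN_refl p)) pm_id. Qed.
Lemma PM_comp x p q r : leNN p q -> leNN q r -> kcomp (PM x p q) (PM x q r) = PM x p r.
Proof. move=> h1 h2; rewrite (PM_pm x h1) (PM_pm x h2) (PM_pm x (leNN_trans h1 h2)). apply pm_comp. Qed.
Lemma PM_deg x p q : leNN p q -> kdeg (PM x p q) = subNN q p.
Proof. move=> h; apply nnE => i; rewrite (PM_pm x h) pm_deg ffunE //. Qed.
Lemma seg0E x n : seg0 x n = PM x (zeroNN k) n.
Proof. by rewrite /seg0 (PM_pm x (le0NN n)). Qed.

Lemma PM_split x p q r : leNN p q -> leNN q r ->
  pre (PM x p r) (subNN q p) = PM x p q /\ suf (PM x p r) (subNN q p) = PM x q r.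
Proof.
move=> h1 h2. have hd : kdom (PM x p q) = kcod (PM x q r) by rewrite PM_dom // PM_cod.
have := fac_uniq hd (PM_comp x h1 h2). by rewrite PM_deg.
Qed.

Lemma PM0_split x p q : leNN p q ->
  pre (PM x (zeroNN k) q) p = PM x (zeroNN k) p /\ suf (PM x (zeroNN k) q) p = PM x p q.
Proof.
move=> h. have e : subNN p (zeroNN k) = p by apply nnE => i; rewrite !ffunE subn0.
have := PM_split x (le0NN p) h. by rewrite e.
Qed.

Lemma pv_PM0 x q : pv x q = kdom (PM x (zeroNN k) q).
Proof. by rewrite PM_dom // le0NN. Qed.
Lemma pv0_PM0 x q : pv x (zeroNN k) = kcod (PM x (zeroNN k) q).
Proof. by rewrite PM_cod // le0NN. Qed.

Lemma agree_PM (x y : ipath L) N p q : PM x (zeroNN k) N = PM y (zeroNN k) N ->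
  leNN p q -> leNN q N -> PM x p q = PM y p q.
Proof.
move=> e h1 h2.
have [a1 a2] := PM0_split x h2. have [b1 b2] := PM0_split y h2.
have eq : PM x (zeroNN k) q = PM y (zeroNN k) q by rewrite -a1 -b1 e.
have [c1 c2] := PM0_split x h1. have [d1 d2] := PM0_split y h1.
by rewrite -c2 -d2 eq.
Qed.

Lemma agree_pv (x y : ipath L) N q : PM x (zeroNN k) N = PM y (zeroNN k) N ->
  leNN q N -> pv x q = pv y q.
Proof. move=> e h; rewrite !pv_PM0; congr kdom; apply: agree_PM e _ h; apply le0NN. Qed.

Lemma agree_mono (x y : ipath L) N M : PM x (zeroNN k) N = PM y (zeroNN k) N ->
  leNN M N -> PM x (zeroNN k) M = PM y (zeroNN k) M.
Proof. move=> e h; apply: agree_PM e _ h; apply le0NN. Qed.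

Lemma cylE (l : mor) (y : ipath L) : cyl l y <-> PM y (zeroNN k) (kdeg l) = l.
Proof. by rewrite /cyl seg0E. Qed.

Lemma cyl_seg (x y : ipath L) N : cyl (seg0 x N) y <-> PM y (zeroNN k) N = PM x (zeroNN k) N.
Proof. rewrite cylE seg0E PM_deg ?le0NN //. have -> : subNN N (zeroNN k) = N by apply nnE => i; rewrite !ffunE subn0. done. Qed.

Lemma cyl_kid v (x : ipath L) : cyl (kid v) x <-> pv x (zeroNN k) = v.
Proof.
rewrite cylE kdeg_id PM_id. split; first by move=> h; rewrite -(kid_cod (pv x _)) h kid_cod.
by move=> ->.
Qed.

Definition SE (m : NN k) (x : ipath L) (n : NN k) (y : ipath L) : Prop :=
  (forall p, pv x (addNN m p) = pv y (addNN n p)) /\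
  (forall p q, leNN p q -> PM x (addNN m p) (addNN m q) = PM y (addNN n p) (addNN n q)).

Lemma shift_eqE m x n y : shift_eq m x n y <-> SE m x n y.
Proof.
split => [[h1 h2]|[h1 h2]]; split => // p q h.
  by rewrite (PM_pm x (leNN_add2l m h)) (PM_pm y (leNN_add2l n h)).
by rewrite -(PM_pm x) -(PM_pm y); apply h2.
Qed.

Lemma SE_seg m x n y : (forall J, PM x m (addNN m J) = PM y n (addNN n J)) -> SE m x n y.
Proof.
move=> h. have hpm : forall p q, leNN p q -> PM x (addNN m p) (addNN m q) = PM y (addNN n p) (addNN n q).
  move=> p q hpq.
  have [_ a] := PM_split x (leNN_addr m p) (leNN_add2l m hpq).
  have [_ b] := PM_split y (leNN_addr n p) (leNN_add2l n hpq).
  rewrite !addNNK in a b. by rewrite -a -b h.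
split => // p. have := hpm p p (leNN_refl p). rewrite !PM_id => e.
by rewrite -(kid_cod (pv x _)) e kid_cod.
Qed.

Lemma SE_sym m x n y : SE m x n y -> SE n y m x.
Proof. by move=> [h1 h2]; split => *; [rewrite h1|rewrite h2]. Qed.
Lemma SE_trans a x b y c z : SE a x b y -> SE b y c z -> SE a x c z.
Proof. move=> [h1 h2] [g1 g2]; split => *; [by rewrite h1 g1|by rewrite h2 ?g2]. Qed.
Lemma SE_add a x b y c : SE a x b y -> SE (addNN a c) x (addNN b c) y.
Proof.
move=> [h1 h2]; split => *; first by rewrite -!addNNA h1.
by rewrite -!addNNA h2 //; apply leNN_add2l.
Qed.
Lemma SE_refl m x : SE m x m x.
Proof. by split. Qed.

Section Shift.
Variables (x : ipath L) (n : NN k).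
Definition sh_pv p := pv x (addNN n p).
Definition sh_pm p q (h : leNN p q) := pm x (leNN_add2l n h).
Lemma sh_cod p q (h : leNN p q) : kcod (sh_pm h) = sh_pv p. Proof. apply pm_cod. Qed.
Lemma sh_dom p q (h : leNN p q) : kdom (sh_pm h) = sh_pv q. Proof. apply pm_dom. Qed.
Lemma sh_id p (h : leNN p p) : sh_pm h = kid (sh_pv p). Proof. apply pm_id. Qed.
Lemma sh_comp p q r (h1 : leNN p q) (h2 : leNN q r) (h3 : leNN p r) :
  kcomp (sh_pm h1) (sh_pm h2) = sh_pm h3. Proof. apply pm_comp. Qed.
Lemma sh_deg p q (h : leNN p q) i : kdeg (sh_pm h) i = (q i - p i)%N.
Proof. rewrite /sh_pm pm_deg !ffunE. lia. Qed.
Definition shiftp : ipath L := IPath sh_cod sh_dom sh_id sh_comp sh_deg.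
End Shift.

Lemma PM_shift x n p q : leNN p q -> PM (shiftp x n) p q = PM x (addNN n p) (addNN n q).
Proof. move=> h; rewrite (PM_pm _ h) (PM_pm x (leNN_add2l n h)). done. Qed.

Lemma SE_shift x n : SE n x (zeroNN k) (shiftp x n).
Proof.
split => p. rewrite add0NN //.
move=> q h; rewrite !add0NN PM_shift //.
Qed.
End KG.


Section Build.
Variables (k : nat) (L : kgraph k).
Local Notation mor := (kmor L).
Variables (mu : nat -> mor) (D0 : NN k).
Hypothesis hdeg : forall j, kdeg (mu j) = addNN D0 (scNN k j).
Hypothesis hcoh : forall j, pre (mu j.+1) (kdeg (mu j)) = mu j.

Lemma d_mono j j' : (j <= j')%N -> leNN (kdeg (mu j)) (kdeg (mu j')).
Proof. move=> h; rewrite !hdeg; apply/leNNP => i; rewrite !ffunE leq_add2l. done. Qed.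

Lemma coh j j' : (j <= j')%N -> pre (mu j') (kdeg (mu j)) = mu j.
Proof.
move=> h; rewrite -(subnK h). elim: (j' - j)%N => [|n IH] /=; first by rewrite pre_full.
rewrite addSn -{2}IH -(hcoh (n + j)). symmetry; apply: (proj1 (pre_pre _ _)).
  by apply d_mono; rewrite leq_addl.
by apply d_mono.
Qed.

Lemma q_le_d q : leNN q (kdeg (mu (maxc q))).
Proof. rewrite hdeg; apply le_sc_add, le_maxc. Qed.

Definition bseg q := pre (mu (maxc q)) q.

Lemma pre_indep j q : leNN q (kdeg (mu j)) -> pre (mu j) q = bseg q.
Proof.
move=> h. rewrite /bseg.
set j' := maxn j (maxc q).
have e1 : pre (mu j') q = pre (mu j) q.
  rewrite -(coh (leq_maxl j (maxc q))). symmetry; apply: (proj1 (pre_pre _ _)) => //.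
  by apply d_mono; rewrite leq_maxl.
have e2 : pre (mu j') q = pre (mu (maxc q)) q.
  rewrite -(coh (leq_maxr j (maxc q))). symmetry; apply: (proj1 (pre_pre _ _)).
    by apply q_le_d.
  by apply d_mono; rewrite leq_maxr.
by rewrite -e1 e2.
Qed.

Lemma bseg_deg q : kdeg (bseg q) = q.
Proof. by rewrite /bseg pre_deg // q_le_d. Qed.

Lemma bseg_pre p q : leNN p q -> pre (bseg q) p = bseg p.
Proof.
move=> h. rewrite /bseg. rewrite (proj1 (pre_pre h (q_le_d q))).
apply pre_indep. exact: leNN_trans h (q_le_d q).
Qed.

Definition b_pv p := kdom (bseg p).
Definition b_pm p q (h : leNN p q) := suf (bseg q) p.
Lemma hle p q : leNN p q -> leNN p (kdeg (bseg q)).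
Proof. by rewrite bseg_deg. Qed.
Lemma b_cod p q (h : leNN p q) : kcod (b_pm h) = b_pv p.
Proof. by rewrite /b_pm suf_cod ?hle // bseg_pre. Qed.
Lemma b_dom p q (h : leNN p q) : kdom (b_pm h) = b_pv q.
Proof. by rewrite /b_pm suf_dom ?hle. Qed.
Lemma b_id p (h : leNN p p) : b_pm h = kid (b_pv p).
Proof.
have hd : kdeg (b_pm h) = zeroNN k.
  rewrite /b_pm suf_deg ?hle // bseg_deg. apply nnE => i; rewrite !ffunE subnn //.
by rewrite (kdeg0 hd) (b_cod h).
Qed.
Lemma b_comp p q r (h1 : leNN p q) (h2 : leNN q r) (h3 : leNN p r) :
  kcomp (b_pm h1) (b_pm h2) = b_pm h3.
Proof.
rewrite /b_pm. rewrite (suf_split h1 (hle h2)). by rewrite bseg_pre.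
Qed.
Lemma b_deg p q (h : leNN p q) i : kdeg (b_pm h) i = (q i - p i)%N.
Proof. by rewrite /b_pm suf_deg ?hle // bseg_deg ffunE. Qed.

Definition bpath : ipath L := IPath b_cod b_dom b_id b_comp b_deg.

Lemma bpath_PM q : PM bpath (zeroNN k) q = bseg q.
Proof. by rewrite (PM_pm _ (le0NN q)) /= /b_pm suf_zero. Qed.

Lemma bpath_mu j : PM bpath (zeroNN k) (kdeg (mu j)) = mu j.
Proof. by rewrite bpath_PM -(pre_indep (leNN_refl _)) pre_full. Qed.
End Build.

Lemma build_path k (L : kgraph k) (mu : nat -> kmor L) (D0 : NN k) :
  (forall j, kdeg (mu j) = addNN D0 (scNN k j)) ->
  (forall j, exists e, kdom (mu j) = kcod e /\ mu j.+1 = kcomp (mu j) e) ->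
  exists y : ipath L, forall j, PM y (zeroNN k) (kdeg (mu j)) = mu j.
Proof.
move=> hd hc.
have hcoh : forall j, pre (mu j.+1) (kdeg (mu j)) = mu j.
  move=> j; have [e [h1 ->]] := hc j; by rewrite pre_comp.
exists (bpath hd hcoh). exact: bpath_mu.
Qed.


Lemma dep_choice (A : Type) (P : A -> Prop) (R : A -> A -> Prop) (a0 : A) :
  P a0 -> (forall a, P a -> exists b, P b /\ R a b) ->
  exists f : nat -> A, f 0%N = a0 /\ forall n, P (f n) /\ R (f n) (f n.+1).
Proof.
move=> h0 hs.
pose step (a : {a : A | P a}) : {a : A | P a} :=
  let e := constructive_indefinite_description _ (hs _ (proj2_sig a)) in
  exist _ (proj1_sig e) (proj1 (proj2_sig e)).
have stepR : forall a, R (proj1_sig a) (proj1_sig (step a)).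
  move=> a; rewrite /step /=; by case: constructive_indefinite_description => b [].
exists (fun n => proj1_sig (iter n step (exist _ a0 h0))); split => // n.
split; first by case: (iter n step _).
by rewrite iterS; apply stepR.
Qed.

Section Paths.
Variables (k : nat) (L : kgraph k).
Local Notation mor := (kmor L).

Lemma ipath_ext (x y : ipath L) : (forall p, pv x p = pv y p) ->
  (forall p q (h : leNN p q), pm x h = pm y h) -> x = y.
Proof.
destruct x as [pv1 pm1 a1 b1 c1 d1 e1]; destruct y as [pv2 pm2 a2 b2 c2 d2 e2]; simpl => h1 h2.
have E1 : pv1 = pv2 by apply functional_extensionality.
subst pv2.
have E2 : pm1 = pm2.
  apply functional_extensionality_dep => p; apply functional_extensionality_dep => q.
  apply functional_extensionality_dep => h; apply h2.
subst pm2. f_equal; apply proof_irrelevance.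
Qed.

Lemma SE00_eq (x y : ipath L) : SE (zeroNN k) x (zeroNN k) y -> x = y.
Proof.
move=> [h1 h2]; apply ipath_ext => [p|p q h].
  by have := h1 p; rewrite add0NN.
by have := h2 p q h; rewrite !add0NN !(PM_pm _ h).
Qed.

Lemma segs_eq (x y : ipath L) : (forall N, PM x (zeroNN k) N = PM y (zeroNN k) N) -> x = y.
Proof.
move=> h; apply SE00_eq, SE_seg => J. rewrite !add0NN. apply h.
Qed.

Lemma segs_eq_sc (x y : ipath L) : (forall j, PM x (zeroNN k) (scNN k j) = PM y (zeroNN k) (scNN k j)) -> x = y.
Proof.
move=> h; apply segs_eq => N. apply: agree_mono (h (maxc N)) _. apply le_maxc.
Qed.

Lemma scNN0 : scNN k 0 = zeroNN k.
Proof. by apply nnE => i; rewrite !ffunE. Qed.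

Lemma concat (l : mor) (x : ipath L) : kdom l = pv x (zeroNN k) ->
  exists y : ipath L, PM y (zeroNN k) (kdeg l) = l /\ SE (kdeg l) y (zeroNN k) x.
Proof.
move=> hl.
pose mu j := kcomp l (PM x (zeroNN k) (scNN k j)).
have hdx : forall j, kdom l = kcod (PM x (zeroNN k) (scNN k j)) by move=> j; rewrite PM_cod ?le0NN.
have hdeg : forall j, kdeg (mu j) = addNN (kdeg l) (scNN k j).
  move=> j; rewrite /mu kdeg_comp // PM_deg ?le0NN //. congr addNN; apply nnE => i; rewrite !ffunE; lia.
have hc : forall j, exists e, kdom (mu j) = kcod e /\ mu j.+1 = kcomp (mu j) e.
  move=> j. have hj : leNN (scNN k j) (scNN k j.+1) by apply le_scNN.
  exists (PM x (scNN k j) (scNN k j.+1)); split.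
    rewrite /mu kcomp_dom // PM_dom ?le0NN // PM_cod //.
  rewrite /mu -kassoc //; first by rewrite PM_comp // le0NN.
  by rewrite PM_dom ?le0NN // PM_cod.
have [y hy] := build_path hdeg hc.
have key : forall J, PM y (zeroNN k) (addNN (kdeg l) J) = kcomp l (PM x (zeroNN k) J).
  move=> J. set j := maxc J. have hJ : leNN J (scNN k j) by apply le_maxc.
  have := hy j. rewrite hdeg => e.
  have [e1 _] := PM0_split y (leNN_add2l (kdeg l) hJ).
  rewrite -e1 e /mu -(PM_comp x (le0NN J) hJ).
  have d1 : kdom l = kcod (PM x (zeroNN k) J) by rewrite PM_cod ?le0NN.
  have d2 : kdom (PM x (zeroNN k) J) = kcod (PM x J (scNN k j)) by rewrite PM_dom ?le0NN // PM_cod.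
  rewrite kassoc //.
  have hd2 : kdom (kcomp l (PM x (zeroNN k) J)) = kcod (PM x J (scNN k j)) by rewrite kcomp_dom.
  have := pre_comp hd2. rewrite kdeg_comp // PM_deg ?le0NN //.
  have -> : subNN J (zeroNN k) = J by apply nnE => i; rewrite !ffunE subn0.
  done.
exists y; split.
  have := key (zeroNN k). rewrite addNN0 PM_id -hl kid_r //.
apply SE_seg => J. rewrite add0NN.
have [_ a] := PM0_split y (leNN_addr (kdeg l) J).
rewrite -a key suf_comp //. by rewrite PM_cod ?le0NN.
Qed.
End Paths.


Section Stab.
Variables (k : nat) (L : kgraph k).
Local Notation mor := (kmor L).

Lemma isoLE (x : ipath L) l : isoL x l <-> exists m n, l = diffNN m n /\ SE m x n x.
Proof.
rewrite /isoL /inG /=. split=> [[m [n [h1 h2]]]|[m [n [h1 h2]]]]; exists m, n; split => //.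
  by apply/shift_eqE. by apply/shift_eqE.
Qed.

Lemma diff_add (a b c d : NN k) : diffNN (addNN a c) (addNN b d) = addZZ (diffNN a b) (diffNN c d).
Proof. apply zzE => i; rewrite !ffunE. lia. Qed.

Lemma iso_subgrp (x : ipath L) : subgrp (isoL x).
Proof.
split; [|split].
- apply/isoLE; exists (zeroNN k), (zeroNN k); split; last exact: SE_refl.
  apply zzE => i; rewrite !ffunE; lia.
- move=> a b /isoLE [m1 [n1 [-> h1]]] /isoLE [m2 [n2 [-> h2]]].
  apply/isoLE; exists (addNN m1 m2), (addNN n1 n2); split; first by rewrite diff_add.
  apply: (SE_trans (SE_add m2 h1)). rewrite (addNNC n1 m2) (addNNC n1 n2).
  exact: SE_add n1 h2.
- move=> a /isoLE [m1 [n1 [-> h1]]]. apply/isoLE; exists n1, m1; split; last exact: SE_sym.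
  apply zzE => i; rewrite !ffunE; lia.
Qed.

Lemma iso_transfer m (x : ipath L) n y l : SE m x n y -> isoL x l -> isoL y l.
Proof.
move=> h /isoLE [a [b [-> hab]]]. apply/isoLE; exists (addNN n a), (addNN n b); split.
  apply zzE => i; rewrite !ffunE; lia.
have s1 : SE (addNN n a) y (addNN m a) x by apply SE_add, SE_sym.
have s2 : SE (addNN m a) x (addNN m b) x by rewrite !(addNNC m); apply SE_add.
have s3 : SE (addNN m b) x (addNN n b) y by apply SE_add.
exact: SE_trans s1 (SE_trans s2 s3).
Qed.

Definition qchi (x : ipath L) (z : torus k) (l : ZZ k) : circ :=
  if excluded_middle_informative (isoL x l) then zpow z l else cone.

Lemma qchi_ok x z : is_char x (qchi x z).
Proof.
split.
- move=> l1 l2 h1 h2. have [_ [hadd _]] := iso_subgrp x.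
  rewrite /qchi. destruct (excluded_middle_informative (isoL x (addZZ l1 l2))) as [h0|n];
    last by exfalso; apply n, hadd.
  destruct (excluded_middle_informative (isoL x l1)) => //.
  destruct (excluded_middle_informative (isoL x l2)) => //.
  apply zpow_add.
- move=> l hl; rewrite /qchi; destruct (excluded_middle_informative (isoL x l)) => //.
Qed.

Definition qstab (x : ipath L) (z : torus k) : stab L := Stab (qchi_ok x z).

Lemma qstab_rel x z : q_rel x z (qstab x z).
Proof. split => // l hl /=; rewrite /qchi; destruct (excluded_middle_informative (isoL x l)) => //. Qed.

Lemma stab_eq (s s' : stab L) : sx s = sx s' ->
  (forall l, isoL (sx s) l -> schi s l = schi s' l) -> s = s'.
Proof.
destruct s as [x chi ok]; destruct s' as [x' chi' ok']; simpl => e h.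
subst x'. have E : chi = chi'.
  apply functional_extensionality => l.
  case: (classic (isoL x l)) => hl; first by apply h.
  by rewrite (proj2 ok l hl) (proj2 ok' l hl).
subst chi'. f_equal; apply proof_irrelevance.
Qed.

Lemma q_rel_eq x z s : q_rel x z s -> s = qstab x z.
Proof.
move=> [e h]; apply stab_eq => //= l hl. rewrite e in hl.
by rewrite h // /qchi; destruct (excluded_middle_informative (isoL x l)).
Qed.

Lemma q_preE (U : stab L -> Prop) x z : q_preimage U x z <-> U (qstab x z).
Proof.
split; first by move=> [s [hs hU]]; rewrite -(q_rel_eq hs).
by move=> h; exists (qstab x z); split => //; apply qstab_rel.
Qed.

Lemma q_surj (s : stab L) : exists z, q_rel (sx s) z s.
Proof.
have hh : homS (isoL (sx s)) (schi s) by move=> a b ha hb; apply (proj1 (schi_ok s)).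
have [z hz] := char_extension (iso_subgrp (sx s)) hh.
by exists z; split.
Qed.

Lemma stab_q (s : stab L) : exists z, s = qstab (sx s) z.
Proof. have [z hz] := q_surj s. by exists z; apply q_rel_eq. Qed.

Lemma qstab_agree x z w : (forall l, isoL x l -> zpow z l = zpow w l) -> qstab x z = qstab x w.
Proof.
move=> h; apply stab_eq => //= l hl; rewrite /qchi; destruct (excluded_middle_informative (isoL x l)) => //; by apply h.
Qed.

Lemma invariance (U : stab L -> Prop) m x n y z : G_invariant U -> SE m x n y ->
  q_preimage U y z -> q_preimage U x z.
Proof.
move=> hU hse. rewrite !q_preE => hy.
have hg : inG (GEl x (diffNN m n) y) by exists m, n; split => //; apply/shift_eqE.
apply: (hU _ _ _ hg _ hy). split => //; split => // l hl /=.
rewrite /qchi.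
have e : addZZ (addZZ (oppZZ (diffNN m n)) l) (diffNN m n) = l by apply zzE => i; rewrite !ffunE; lia.
rewrite e. have hl' := iso_transfer hse hl.
destruct (excluded_middle_informative (isoL x l)) => //.
destruct (excluded_middle_informative (isoL y l)) => //.
Qed.

Lemma invariance_iff (U : stab L -> Prop) m x n y z : G_invariant U -> SE m x n y ->
  (q_preimage U x z <-> q_preimage U y z).
Proof. move=> hU h; split; [apply: invariance hU (SE_sym h) | apply: invariance hU h]. Qed.
End Stab.


Section Topo.
Variables (k : nat) (L : kgraph k).
Local Notation mor := (kmor L).
Local Notation O0 := (zeroNN k).
Local Notation sc := (scNN k).

Definition near (x : ipath L) (j : nat) (y : ipath L) := PM y O0 (sc j) = PM x O0 (sc j).

Lemma near_mono x j j' y : (j <= j')%N -> near x j' y -> near x j y.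
Proof. rewrite /near => h e; apply: agree_mono e _; by apply le_scNN. Qed.

Lemma near_refl x j : near x j x. Proof. by []. Qed.

Lemma open_nbhd (U : ipath L -> Prop) x : open_path U -> U x -> exists j, forall y, near x j y -> U y.
Proof.
move=> hU hx. have [l [hl hall]] := hU x hx. exists (maxc (kdeg l)) => y hy.
apply hall; apply/cylE. move/cylE: hl => hl. apply: etrans _ hl. apply: agree_mono hy _. apply le_maxc.
Qed.

Lemma open_near x j : open_path (near x j).
Proof.
move=> y hy; exists (seg0 y (sc j)); split; first by apply/cyl_seg.
move=> y' /cyl_seg h. rewrite /near h. exact hy.
Qed.

Lemma open_not_near x j : open_path (fun y => ~ near x j y).
Proof.
move=> y hy; exists (seg0 y (sc j)); split; first by apply/cyl_seg.
move=> y' /cyl_seg h. rewrite /near h. exact hy.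
Qed.

Lemma open_full : open_path (fun _ : ipath L => True).
Proof. move=> y _; exists (kid (pv y O0)); split => //; by apply/cyl_kid. Qed.

Lemma open_cyl (l : mor) : open_path (cyl l).
Proof. by move=> y hy; exists l; split. Qed.

Lemma open_G_label (P : ZZ k -> Prop) : open_G (fun g : gel L => inG g /\ P (glab g)).
Proof.
move=> g [[m [n [hl hs]]] hP].
exists (fun _ => True), m, n, (fun _ => True); split; first exact: open_full.
split; first exact: open_full. split; first by [].
move=> g' [_ [_ [hl' hs']]]; split; first by exists m, n.
by rewrite hl' -hl.
Qed.

Lemma open_G_pair m n : open_G (fun g : gel L => glab g = diffNN m n /\ shift_eq m (grng g) n (gsrc g)).
Proof.
move=> g [hl hs].
exists (fun _ => True), m, n, (fun _ => True); split; first exact: open_full.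
split; first exact: open_full. split; first by [].
by move=> g' [_ [_ [hl' hs']]]; split.
Qed.

Lemma open_G_far x j : open_G (fun g : gel L => inG g /\ ~ near x j (grng g)).
Proof.
move=> g [[m [n [hl hs]]] hP].
exists (fun y => ~ near x j y), m, n, (fun _ => True); split; first exact: open_not_near.
split; first exact: open_full. split; first by [].
move=> g' [h1 [_ [hl' hs']]]; split => //. by exists m, n.
Qed.

Lemma SE_PM (m p q n : NN k) (x y : ipath L) : SE m x n y -> leNN p q ->
  PM x (addNN m p) (addNN m q) = PM y (addNN n p) (addNN n q).
Proof. by move=> [_ h] hpq; apply h. Qed.

Lemma not_pair_nbhd m n (x : ipath L) : ~ SE m x n x ->
  exists j, forall y, near x j y -> ~ SE m y n y.
Proof.
move=> hno.
have [J hJ] : exists J, PM x m (addNN m J) <> PM x n (addNN n J).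
  apply: NNPP => H. apply hno, SE_seg => J. apply: NNPP => H2; apply H; by exists J.
exists (maxc (maxNN (addNN m J) (addNN n J))) => y hy hse.
have h1 : leNN (addNN m J) (sc (maxc (maxNN (addNN m J) (addNN n J)))).
  apply: leNN_trans (le_maxc _). apply le_maxNNl.
have h2 : leNN (addNN n J) (sc (maxc (maxNN (addNN m J) (addNN n J)))).
  apply: leNN_trans (le_maxc _). apply le_maxNNr.
apply hJ. rewrite -(agree_PM hy (leNN_addr m J) h1) -(agree_PM hy (leNN_addr n J) h2).
have := SE_PM hse (le0NN J). by rewrite !addNN0.
Qed.

Lemma PM_deq (x : ipath L) p q p' q' : p = p' -> q = q' -> PM x p q = PM x p' q'.
Proof. by move=> -> ->. Qed.

Lemma pair_transfer a b m n (y : ipath L) : SE a y b y -> SE m y n y ->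
  diffNN a b = diffNN m n ->
  exists j, forall y', near y j y' -> SE a y' b y' -> SE m y' n y'.
Proof.
move=> hab hmn hd.
set t := maxNN a m. set d := subNN t m. set d' := subNN t a.
have e1 : addNN m d = t by apply nnE => i; rewrite !ffunE; lia.
have e2 : addNN a d' = t by apply nnE => i; rewrite !ffunE; lia.
have e3 : addNN n d = addNN b d'.
  apply nnE => i; have := congr1 (fun f : ZZ k => f i) hd; rewrite !ffunE /= => hi. lia.
set T := maxNN t (addNN n d).
exists (maxc T) => y' hy hab'.
have hT1 : leNN t (sc (maxc T)) by apply: leNN_trans (le_maxc _); apply le_maxNNl.
have hT2 : leNN (addNN n d) (sc (maxc T)) by apply: leNN_trans (le_maxc _); apply le_maxNNr.
apply SE_seg => J.
have key : PM y' m (addNN m (addNN d J)) = PM y' n (addNN n (addNN d J)).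
  have c1 : leNN m (addNN m d) by apply leNN_addr.
  have c2 : leNN (addNN m d) (addNN m (addNN d J)) by rewrite addNNA; apply leNN_addr.
  have c3 : leNN n (addNN n d) by apply leNN_addr.
  have c4 : leNN (addNN n d) (addNN n (addNN d J)) by rewrite addNNA; apply leNN_addr.
  rewrite -(PM_comp y' c1 c2) -(PM_comp y' c3 c4). congr kcomp.
    rewrite (agree_PM hy c1); last by rewrite e1.
    rewrite (agree_PM hy c3) //.
    have := SE_PM hmn (le0NN d). by rewrite !addNN0.
  have := SE_PM hab' (leNN_addr d' J).
  move=> E. apply: etrans (etrans _ E) _.
    apply PM_deq; first by rewrite e1 -e2.
    by rewrite addNNA e1 -e2 addNNA.
  apply PM_deq; first by rewrite e3.
  by rewrite !addNNA e3.
have s1 := PM_split y' (leNN_addr m J) (leNN_add2l m (leNN_addl J d)).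
have s2 := PM_split y' (leNN_addr n J) (leNN_add2l n (leNN_addl J d)).
rewrite !addNNK in s1 s2.
by rewrite -(proj1 s1) -(proj1 s2) key.
Qed.
End Topo.


Section Part2.
Variables (k : nat) (L : kgraph k).
Local Notation mor := (kmor L).
Local Notation O0 := (zeroNN k).
Local Notation sc := (scNN k).

Definition jmax (s : list (option nat)) : nat := List.fold_right (fun o acc => maxn (odflt 0%N o) acc) 0%N s.
Lemma jmax_in s j : List.In (Some j) s -> (j <= jmax s)%N.
Proof.
elim: s => [|a s IH] //= [->|h]; first by apply leq_maxl.
apply: leq_trans (IH h) _; apply leq_maxr.
Qed.

Lemma compact_claim (K : gel L -> Prop) (x : ipath L) : compact_iso K ->
  exists j, forall y l, near x j y -> K (GEl y l y) -> K (GEl x l x).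
Proof.
move=> [hiso hc].
pose W (o : option nat) : gel L -> Prop :=
  match o with None => fun g => inG g /\ K (GEl x (glab g) x)
  | Some j => fun g => inG g /\ ~ near x j (grng g) end.
have hW : forall o, open_G (W o).
  case=> [j|] /=; [exact: open_G_far | exact: (@open_G_label k L (fun l => K (GEl x l x)))].
have cov : forall g, K g -> exists o, W o g.
  move=> g hg. have [hG hrs] := hiso g hg.
  case: (classic (K (GEl x (glab g) x))) => hK; first by exists None.
  case: (classic (exists j, ~ near x j (grng g))) => [[j hj]|hno]; first by exists (Some j).
  exfalso; apply hK.
  have e : grng g = x.
    apply segs_eq_sc => j. apply: NNPP => H; apply hno; exists j; exact H.
  by destruct g as [r lab s]; simpl in *; subst.
have [s hs] := hc _ W hW cov.
exists (jmax s) => y l hy hK.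
have [o [ho hWo]] := hs _ hK.
case: o ho hWo => [j|] ho /= [_ hh] //.
exfalso; apply hh. apply: near_mono hy. exact: jmax_in.
Qed.

Lemma pairs_claim (K : gel L -> Prop) : compact_iso K ->
  exists P : list (NN k * NN k), forall g, K g -> exists mn, List.In mn P /\
     glab g = diffNN mn.1 mn.2 /\ shift_eq mn.1 (grng g) mn.2 (gsrc g).
Proof.
move=> [hiso hc].
pose W (mn : NN k * NN k) : gel L -> Prop := fun g => glab g = diffNN mn.1 mn.2 /\ shift_eq mn.1 (grng g) mn.2 (gsrc g).
have hW : forall mn, open_G (W mn) by move=> [m n]; apply open_G_pair.
have cov : forall g, K g -> exists mn, W mn g.
  move=> g hg. have [[m [n [h1 h2]]] _] := hiso g hg. by exists (m, n).
have [s hs] := hc _ W hW cov.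
exists s => g hg. have [mn [h1 [h2 h3]]] := hs g hg. by exists mn.
Qed.

Lemma near_list (A : Type) (bs : list A) (P : A -> ipath L -> Prop) (x : ipath L) :
  (forall b, List.In b bs -> exists j, forall y, near x j y -> P b y) ->
  exists j, forall y, near x j y -> forall b, List.In b bs -> P b y.
Proof.
elim: bs => [|b bs IH] h; first by exists 0%N.
have [j1 h1] := h b (or_introl erefl).
have [j2 h2] := IH (fun b' hb' => h b' (or_intror hb')).
exists (maxn j1 j2) => y hy b' [<-|hb'].
  apply h1; apply: near_mono hy; apply leq_maxl.
apply h2 => //; apply: near_mono hy; apply leq_maxr.
Qed.

Lemma iso_of_K (K : gel L -> Prop) y l : compact_iso K -> K (GEl y l y) -> isoL y l.
Proof. by move=> [hiso _] hK; have [] := hiso _ hK. Qed.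

Lemma qchi_iso (y : ipath L) z l : isoL y l -> qchi y z l = zpow z l.
Proof. by move=> h; rewrite /qchi; destruct (excluded_middle_informative (isoL y l)). Qed.

Lemma kdeg_PM0 (x : ipath L) n : kdeg (PM x O0 n) = n.
Proof. rewrite PM_deg ?le0NN //; apply nnE => i; rewrite !ffunE subn0 //. Qed.

Lemma pv_shift0 (x : ipath L) n : pv (shiftp x n) O0 = pv x n.
Proof. by rewrite /= /sh_pv addNN0. Qed.

Lemma near_concat (x x' : ipath L) j : pv x' O0 = pv x (sc j) ->
  exists y, near x j y /\ SE (sc j) y O0 x'.
Proof.
move=> h. have hl : kdom (PM x O0 (sc j)) = pv x' O0 by rewrite PM_dom ?le0NN.
have [y [h1 h2]] := concat hl. rewrite kdeg_PM0 in h1 h2. by exists y.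
Qed.

Variable U : stab L -> Prop.
Hypothesis hUo : open_stab U.
Hypothesis hUi : G_invariant U.

Definition DU (p : kobj L * torus k) : Prop :=
  forall x : ipath L, pv x O0 = p.1 -> q_preimage U x p.2.

Lemma basic_near (b : (ipath L -> Prop) * (gel L -> Prop) * (circ -> Prop)) x z :
  valid_basic b -> Obasic b.1.1 b.1.2 b.2 (qstab x z) ->
  exists j, forall y, near x j y -> Obasic b.1.1 b.1.2 b.2 (qstab y z).
Proof.
case: b => [[Ub Kb] Vb] [hUb [hKb hVb]] /= [hx hxK].
have [j1 h1] := open_nbhd hUb hx.
have [j2 h2] := compact_claim x hKb.
exists (maxn j1 j2) => y hy; split => /=.
  apply h1; apply: near_mono hy; apply leq_maxl.
move=> l hK. have hK' := h2 y l (near_mono (leq_maxr _ _) hy) hK.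
have := hxK l hK'. rewrite /= !qchi_iso //; [exact: iso_of_K hKb hK|exact: iso_of_K hKb hK'].
Qed.

Lemma part2_sat x z : q_preimage U x z <-> D_saturation DU x z.
Proof.
split.
- move=> /q_preE hU.
  have [bs [hval [hin hall]]] := hUo hU.
  have [j hj] := @near_list _ bs (fun b y => Obasic b.1.1 b.1.2 b.2 (qstab y z)) x
     (fun b hb => basic_near (hval b hb) (hin b hb)).
  exists (sc j) => x' hx' /=.
  have [y [hy hse]] := near_concat hx'.
  apply: (invariance hUi (SE_sym hse)). apply/q_preE. apply hall => b hb. exact: hj.
- move=> [n hn]. have := hn (shiftp x n) (pv_shift0 x n).
  apply: invariance hUi (SE_shift x n).
Qed.

Lemma part2_cond_i : cond_i DU.
Proof.
move=> z; split.
- move=> l hl x hx /=.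
  have [y [h1 h2]] := concat (esym hx).
  apply: (invariance hUi (SE_sym h2)). apply hl => /=.
  by rewrite (pv0_PM0 y (kdeg l)) h1.
- move=> v n hn x hx /=.
  have h := hn (PM x O0 n). rewrite PM_dom ?le0NN // in h.
  apply: invariance hUi (SE_shift x n) _.
  apply: (h _ _ (shiftp x n)); [by rewrite PM_cod ?le0NN | exact: kdeg_PM0 | exact: pv_shift0].
Qed.

Lemma D_unique (D D' : kobj L * torus k -> Prop) : cond_i D -> cond_i D' ->
  (forall x z, D_saturation D x z <-> D_saturation D' x z) -> forall p, D p -> D' p.
Proof.
move=> hD hD' heq [v z] hp. apply: NNPP => hn.
pose P (mu : mor) := ~ D' (kdom mu, z).
pose R (mu mu' : mor) := exists e, kdom mu = kcod e /\ mu' = kcomp mu e /\ kdeg e = sc 1.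
have h0 : P (kid v) by rewrite /P kid_dom.
have hstep : forall mu, P mu -> exists mu', P mu' /\ R mu mu'.
  move=> mu hmu. have [_ hsat] := hD' z.
  case: (classic (exists e, kcod e = kdom mu /\ kdeg e = sc 1 /\ ~ D' (kdom e, z))) => [[e [h1 [h2 h3]]]|hno].
    exists (kcomp mu e); split; first by rewrite /P kcomp_dom.
    by exists e.
  exfalso; apply hmu. apply (hsat (kdom mu) (sc 1)) => l h1 h2.
  apply: NNPP => h3; apply hno; by exists l.
have [f [f0 hf]] := @dep_choice mor P R (kid v) h0 hstep.
have hdeg : forall j, kdeg (f j) = addNN O0 (sc j).
  elim=> [|j IH]; first by rewrite f0 kdeg_id add0NN; apply nnE => i; rewrite !ffunE.
  have [_ [e [h1 [-> h3]]]] := hf j. rewrite kdeg_comp // IH h3. apply nnE => i; rewrite !ffunE; lia.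
have hc : forall j, exists e, kdom (f j) = kcod e /\ f j.+1 = kcomp (f j) e.
  move=> j; have [_ [e [h1 [h2 _]]]] := hf j; by exists e.
have [y hy] := build_path hdeg hc.
have hy' : forall j, PM y O0 (sc j) = f j by move=> j; rewrite -hy hdeg add0NN.
have hv : pv y O0 = v.
  by rewrite (pv_PM0 y O0) -scNN0 hy' f0 kid_dom.
have : D_saturation D y z by exists O0; rewrite hv.
move=> /heq [n hn2].
have hle : leNN n (sc (maxc n)) by apply le_maxc.
have [hher _] := hD' z.
have := hher (PM y n (sc (maxc n))). rewrite PM_cod // PM_dom // => /(_ hn2).
rewrite (pv_PM0 y) hy'. have [] := hf (maxc n). done.
Qed.
End Part2.


Section Part2b.
Variables (k : nat) (L : kgraph k).
Local Notation mor := (kmor L).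
Local Notation O0 := (zeroNN k).
Local Notation sc := (scNN k).

Definition dmn (mn : NN k * NN k) := diffNN mn.1 mn.2.

Lemma pairs_data (Kb : gel L -> Prop) (Vb : circ -> Prop) (x : ipath L) (z : torus k) :
  open_circ Vb -> (forall l, Kb (GEl x l x) -> Vb (qchi x z l)) ->
  forall P : list (NN k * NN k),
  exists (j : nat) (eps : R) (mns : list (NN k * NN k)), Rlt 0 eps /\ (forall mn, List.In mn mns -> SE mn.1 x mn.2 x) /\
   forall y, near x j y -> forall mn, List.In mn P -> SE mn.1 y mn.2 y ->
     List.In mn mns /\ (Kb (GEl x (dmn mn) x) -> forall w', Rlt (cdist (zpow z (dmn mn)) w') eps -> Vb w').
Proof.
move=> hVb hx; elim=> [|mn P IH].
  by exists 0%N, R1, nil; split; [lra|split].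
have [j' [eps' [mns' [he' [hm' hP']]]]] := IH.
case: (classic (SE mn.1 x mn.2 x)) => hse.
- have [e [he hK]] : exists e, Rlt 0 e /\ (Kb (GEl x (dmn mn) x) -> forall w', Rlt (cdist (zpow z (dmn mn)) w') e -> Vb w').
    case: (classic (Kb (GEl x (dmn mn) x))) => hK; last by exists R1; split => //; lra.
    have := hx _ hK. rewrite qchi_iso; last by apply/isoLE; exists mn.1, mn.2.
    move=> /hVb [e [he hball]]. by exists e; split => // _.
  exists j', (Rmin eps' e), (mn :: mns'); split; first by apply Rmin_pos.
  split; first by move=> mn0 [<-|h]; [|apply hm'].
  move=> y hy mn0 [<-|h] hs.
    split; first by left. move=> hK0 w' hw'. apply hK => //. have := Rmin_r eps' e; lra.
  have [h1 h2] := hP' y hy mn0 h hs. split; first by right.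
  move=> hK0 w' hw'. apply h2 => //. have := Rmin_l eps' e; lra.
- have [j1 hj1] := not_pair_nbhd hse.
  exists (maxn j' j1), eps', mns'; split => //; split => //.
  move=> y hy mn0 [<-|h] hs.
    exfalso; apply: (hj1 y) hs; apply: near_mono hy; apply leq_maxr.
  apply: (hP' y _ mn0 h hs); apply: near_mono hy; apply leq_maxl.
Qed.

Lemma basic_data (b : (ipath L -> Prop) * (gel L -> Prop) * (circ -> Prop)) x z :
  valid_basic b -> Obasic b.1.1 b.1.2 b.2 (qstab x z) ->
  exists (j : nat) (eps : R) (mns : list (NN k * NN k)), Rlt 0 eps /\ (forall mn, List.In mn mns -> SE mn.1 x mn.2 x) /\
   forall y w, near x j y ->
     (forall mn, List.In mn mns -> SE mn.1 y mn.2 y -> Rlt (cdist (zpow z (dmn mn)) (zpow w (dmn mn))) eps) ->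
     Obasic b.1.1 b.1.2 b.2 (qstab y w).
Proof.
case: b => [[Ub Kb] Vb] [hUb [hKb hVb]] /= [hx hxK].
have [P hP] := pairs_claim hKb.
have [j3 [eps [mns [he [hm hd]]]]] := pairs_data hVb hxK P.
have [j1 h1] := open_nbhd hUb hx.
have [j2 h2] := compact_claim x hKb.
exists (maxn j1 (maxn j2 j3)), eps, mns; split => //; split => //.
move=> y w hy hw; split => /=.
  apply h1; apply: near_mono hy; apply leq_maxl.
move=> l hK.
have hK' := h2 y l (near_mono (leq_trans (leq_maxl _ _) (leq_maxr _ _)) hy) hK.
have [mn [hin [hl hsh]]] := hP _ hK. simpl in hl, hsh. move/shift_eqE: hsh => hsh.
have [hin2 hball] := hd y (near_mono (leq_trans (leq_maxr _ _) (leq_maxr _ _)) hy) mn hin hsh.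
rewrite qchi_iso; last exact: iso_of_K hKb hK.
rewrite hl. apply hball; first by rewrite /dmn -hl.
exact: hw.
Qed.

Lemma basics_data (bs : list ((ipath L -> Prop) * (gel L -> Prop) * (circ -> Prop))) x z :
  (forall b, List.In b bs -> valid_basic b) -> in_basics bs (qstab x z) ->
  exists (j : nat) (eps : R) (mns : list (NN k * NN k)), Rlt 0 eps /\ (forall mn, List.In mn mns -> SE mn.1 x mn.2 x) /\
   forall y w, near x j y ->
     (forall mn, List.In mn mns -> SE mn.1 y mn.2 y -> Rlt (cdist (zpow z (dmn mn)) (zpow w (dmn mn))) eps) ->
     in_basics bs (qstab y w).
Proof.
elim: bs => [|b bs IH] hv hin.
  exists 0%N, R1, nil; split; first lra. split; first by []. by move=> y w _ _ b0 [].
have [j1 [e1 [m1 [he1 [hm1 hd1]]]]] := basic_data (hv b (or_introl erefl)) (hin b (or_introl erefl)).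
have [j2 [e2 [m2 [he2 [hm2 hd2]]]]] := IH (fun b' h => hv b' (or_intror h)) (fun b' h => hin b' (or_intror h)).
exists (maxn j1 j2), (Rmin e1 e2), (m1 ++ m2); split; first by apply Rmin_pos.
split. move=> mn h; case: (List.in_app_or _ _ _ h) => h'; [exact: hm1|exact: hm2].
move=> y w hy hw b' [<-|hb'].
  apply hd1; first by apply: near_mono hy; apply leq_maxl.
  move=> mn h hs; have := hw mn (List.in_or_app _ _ _ (or_introl h)) hs; have := Rmin_l e1 e2; lra.
apply hd2 => //; first by apply: near_mono hy; apply leq_maxr.
move=> mn h hs; have := hw mn (List.in_or_app _ _ _ (or_intror h)) hs; have := Rmin_r e1 e2; lra.
Qed.

Lemma pairs_back (mns : list (NN k * NN k)) (y : ipath L) :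
  exists j, forall y'', near y j y'' -> forall mn, List.In mn mns -> SE mn.1 y'' mn.2 y'' -> SE mn.1 y mn.2 y.
Proof.
apply: (@near_list k L _ mns (fun mn y'' => SE mn.1 y'' mn.2 y'' -> SE mn.1 y mn.2 y)) => mn _.
case: (classic (SE mn.1 y mn.2 y)) => h; first by exists 0%N.
have [j hj] := not_pair_nbhd h. exists j => y'' hy hs. by exfalso; apply: hj hy hs.
Qed.

Variable U : stab L -> Prop.
Hypothesis hUo : open_stab U.
Hypothesis hUi : G_invariant U.

Lemma part2_cond_ii : cond_ii (DU U).
Proof.
move=> v z hD x /cyl_kid hx.
have := hD x hx. move=> /q_preE hU.
have [bs [hval [hin hall]]] := hUo hU.
have [j [eps [mns [he [hm hd]]]]] := basics_data hval hin.
exists eps, (sc j), mns; split => //; split.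
  by move=> mn h; apply/shift_eqE; apply hm.
move=> y /cyl_seg hy.
have [j4 hj4] := pairs_back mns y.
exists (sc (maxn j j4)) => w hw x' hx' /=.
have [y'' [hy'' hse]] := near_concat hx'.
apply: (invariance hUi (SE_sym hse)). apply/q_preE. apply hall.
apply hd.
  rewrite /near -hy. exact: (near_mono (leq_maxl j j4) hy'').
move=> mn h hs. apply hw => //. apply/shift_eqE. apply: hj4 h hs.
apply: near_mono hy''; apply leq_maxr.
Qed.
End Part2b.


Section Compact.
Variables (k : nat) (L : kgraph k).
Local Notation mor := (kmor L).
Local Notation O0 := (zeroNN k).
Local Notation sc := (scNN k).
Hypothesis HL : row_finite_no_sources L.

Definition Kset (lam : mor) (a b : NN k) : gel L -> Prop :=
  fun g => exists y, g = GEl y (diffNN a b) y /\ cyl lam y /\ SE a y b y.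

Lemma cover_union (I : Type) (W : I -> gel L -> Prop) (Km : mor -> gel L -> Prop)
  (Q : mor -> Prop) (f : mor -> mor) (E : list mor) :
  (forall e, List.In e E -> Q e -> exists s : list I, forall g, Km (f e) g -> exists i, List.In i s /\ W i g) ->
  exists s : list I, forall e, List.In e E -> Q e -> forall g, Km (f e) g -> exists i, List.In i s /\ W i g.
Proof.
elim: E => [|e E IH] h; first by exists nil.
have [s2 h2] := IH (fun e' he' => h e' (or_intror he')).
case: (classic (Q e)) => hq.
  have [s1 h1] := h e (or_introl erefl) hq.
  exists (s1 ++ s2) => e' [<-|he'] hq' g hg.
    have [i [hi hw]] := h1 g hg. exists i; split => //; apply List.in_or_app; by left.
  have [i [hi hw]] := h2 e' he' hq' g hg. exists i; split => //; apply List.in_or_app; by right.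
exists s2 => e' [<-|he'] hq' g hg; first by [].
exact: (h2 e' he' hq' g hg).
Qed.

Lemma K_compact lam a b : compact_iso (Kset lam a b).
Proof.
split.
  move=> g [y [-> [_ hs]]]. split => //. exists a, b; split => //; by apply/shift_eqE.
move=> I W hW hcov. apply: NNPP => hno.
pose Km (mu : mor) (g : gel L) := exists y, g = GEl y (diffNN a b) y /\ PM y O0 (kdeg mu) = mu /\ SE a y b y.
pose covered mu := exists s : list I, forall g, Km mu g -> exists i, List.In i s /\ W i g.
pose R (mu mu' : mor) := exists e, kdom mu = kcod e /\ mu' = kcomp mu e /\ kdeg e = sc 1.
have bad0 : ~ covered lam.
  move=> [s hs]; apply hno; exists s => g [y [-> [hc hse]]]. apply hs; exists y; split => //; split => //.
  by apply/cylE.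
have step : forall mu, ~ covered mu -> exists mu', ~ covered mu' /\ R mu mu'.
  move=> mu hmu. apply: NNPP => hn. apply hmu.
  have [_ [E hE]] := HL (kdom mu) (sc 1).
  have hcv : forall e, List.In e E -> (kcod e = kdom mu /\ kdeg e = sc 1) -> covered (kcomp mu e).
    move=> e _ [h1 h2]; apply: NNPP => hc; apply hn; exists (kcomp mu e); split => //.
    exists e; split => //; split => //.
  have [s hs] := @cover_union I W Km (fun e => kcod e = kdom mu /\ kdeg e = sc 1) (kcomp mu) E hcv.
  exists s => g [y [-> [hy hse]]].
  set e := PM y (kdeg mu) (addNN (kdeg mu) (sc 1)).
  have he1 : kcod e = kdom mu by rewrite PM_cod ?leNN_addr // (pv_PM0 y) hy.
  have he2 : kdeg e = sc 1 by rewrite PM_deg ?leNN_addr // addNNK.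
  apply: (hs e (hE e he1 he2) (conj he1 he2)).
  exists y; split => //; split => //.
  have hd : kdom mu = kcod e by rewrite he1.
  rewrite kdeg_comp // he2 -(PM_comp y (le0NN (kdeg mu)) (leNN_addr (kdeg mu) (sc 1))) hy //.
have [f [f0 hf]] := @dep_choice mor (fun mu => ~ covered mu) R lam bad0 step.
have hdeg : forall j, kdeg (f j) = addNN (kdeg lam) (sc j).
  elim=> [|j IH]; first by rewrite f0 scNN0 addNN0.
  have [_ [e [h1 [-> h3]]]] := hf j. rewrite kdeg_comp // IH h3. apply nnE => i; rewrite !ffunE; lia.
have hc : forall j, exists e, kdom (f j) = kcod e /\ f j.+1 = kcomp (f j) e.
  move=> j; have [_ [e [h1 [h2 _]]]] := hf j; by exists e.
have [y hy] := build_path hdeg hc.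
have nearf : forall j y', PM y' O0 (kdeg (f j)) = f j -> near y j y'.
  move=> j y' h. rewrite /near. apply: agree_mono (etrans h (esym (hy j))) _.
  rewrite hdeg; apply leNN_addl.
have hsey : SE a y b y.
  apply: NNPP => hn. have [j hj] := not_pair_nbhd hn.
  have [hbad _] := hf j. apply hbad. exists nil => g [y' [_ [h1 h2]]].
  exfalso; exact: hj y' (nearf j y' h1) h2.
have hcyl : cyl lam y by apply/cylE; rewrite -f0 hy.
have [i hWi] := hcov (GEl y (diffNN a b) y) (ex_intro _ y (conj erefl (conj hcyl hsey))).
have [U [m [n [V [hU [hV [[hUy [hVy [hl hsh]]] hZ]]]]]]] := hW i _ hWi.
simpl in hUy, hVy, hl, hsh. move/shift_eqE: hsh => hsh.
have [j1 hj1] := pair_transfer hsey hsh hl.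
have [j2 hj2] := open_nbhd hU hUy.
have [j3 hj3] := open_nbhd hV hVy.
set J := maxn j1 (maxn j2 j3).
have [hbad _] := hf J. apply hbad. exists (i :: nil) => g [y' [-> [h1 h2]]].
exists i; split; first by left.
have hn := nearf J y' h1.
apply hZ; split => /=.
  apply hj2; apply: near_mono hn; rewrite /J; apply: leq_trans (leq_maxl j2 j3) (leq_maxr _ _).
split. apply hj3; apply: near_mono hn; rewrite /J; apply: leq_trans (leq_maxr j2 j3) (leq_maxr _ _).
split => //. apply/shift_eqE. apply: hj1 h2. apply: near_mono hn; apply leq_maxl.
Qed.
End Compact.


Section Part1.
Variables (k : nat) (L : kgraph k).
Local Notation mor := (kmor L).
Local Notation O0 := (zeroNN k).
Local Notation sc := (scNN k).
Hypothesis HL : row_finite_no_sources L.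
Variable D : kobj L * torus k -> Prop.
Hypothesis hDi : cond_i D.
Hypothesis hDii : cond_ii D.

Lemma Dsat_transfer m (x : ipath L) n y z : SE m x n y -> D_saturation D y z -> D_saturation D x z.
Proof.
move=> [hpv _] [j hj]. exists (addNN m j).
have [hher _] := hDi z.
have := hher (PM y j (addNN n j)). rewrite PM_cod ?leNN_addl // PM_dom ?leNN_addl // => /(_ hj).
by rewrite hpv.
Qed.

Lemma WD (x : ipath L) z z' : (forall l, isoL x l -> zpow z l = zpow z' l) ->
  D_saturation D x z' -> D_saturation D x z.
Proof.
move=> hag [n hn].
have hc : cyl (kid (pv x n)) (shiftp x n) by apply/cyl_kid; rewrite pv_shift0.
have [eps [n' [mns [he [hp hprop]]]]] := hDii hn hc.
have [m hm] := hprop (shiftp x n) (proj2 (cyl_seg _ _ _) erefl).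
exists (addNN n m). have := hm z. rewrite /= /sh_pv. apply.
move=> mn _ /shift_eqE hs.
have hi : isoL (shiftp x n) (diffNN mn.1 mn.2) by apply/isoLE; exists mn.1, mn.2.
have hi' := iso_transfer (SE_sym (SE_shift x n)) hi.
by rewrite (hag _ hi') cdist_refl.
Qed.

Definition UD (s : stab L) : Prop := exists z, q_rel (sx s) z s /\ D_saturation D (sx s) z.

Lemma UD_q x z : q_preimage UD x z <-> D_saturation D x z.
Proof.
split.
  move=> [s [[hx hq] [z' [[_ hq'] hd]]]]. rewrite hx in hq' hd.
  apply: WD hd => l hl. by rewrite -hq // -hq'.
move=> hd; exists (qstab x z); split; first exact: qstab_rel.
by exists z; split; [exact: qstab_rel|].
Qed.

Lemma UD_inv : G_invariant UD.
Proof.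
move=> g s s' [m [n [hl hsh]]] [hsrc [hrng hchi]] [z [[_ hq] hd]].
move/shift_eqE: hsh => hsh.
exists z; split; last first.
  rewrite hrng. rewrite -hsrc in hd. exact: Dsat_transfer hsh hd.
split => // l hl'. rewrite hrng in hl'. rewrite hchi //.
have e : addZZ (addZZ (oppZZ (glab g)) l) (glab g) = l by apply zzE => i; rewrite !ffunE; lia.
rewrite e hq //. rewrite -hsrc. exact: iso_transfer hsh hl'.
Qed.

Lemma diff_shift (c a b : NN k) : diffNN (addNN c a) (addNN c b) = diffNN a b.
Proof. apply zzE => i; rewrite !ffunE; lia. Qed.

Lemma compact_false : compact_iso (fun _ : gel L => False).
Proof. split => // I W _ _. by exists nil. Qed.

Lemma UD_open : open_stab UD.
Proof.
move=> s [z [hq [n0 hn0]]].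
set x := sx s in hq hn0. have es := q_rel_eq hq.
have hc : cyl (kid (pv x n0)) (shiftp x n0) by apply/cyl_kid; rewrite pv_shift0.
have [eps [n [mns [he [hp hprop]]]]] := hDii hn0 hc.
set lam := PM x O0 (addNN n0 n).
pose bmn (mn : NN k * NN k) : (ipath L -> Prop) * (gel L -> Prop) * (circ -> Prop) :=
  (cyl lam, Kset lam (addNN n0 mn.1) (addNN n0 mn.2), fun w => Rlt (cdist (zpow z (dmn mn)) w) eps).
exists ((cyl lam, (fun _ : gel L => False), (fun _ : circ => True)) :: List.map bmn mns).
have hlamx : cyl lam x by apply/cylE; rewrite kdeg_PM0.
split; [|split].
- move=> b [<-|hb].
    split; first exact: open_cyl. split; first exact: compact_false. by move=> w _; exists R1; split => //; lra.
  have [mn [<- hin]] := proj1 (List.in_map_iff _ _ _) hb.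
  split; first exact: open_cyl. split; first exact: K_compact.
  exact: ball_open.
- rewrite es. move=> b [<-|hb]; first by split.
  have [mn [<- hin]] := proj1 (List.in_map_iff _ _ _) hb.
  split => //= l [y [e [_ hse]]]. case: e => e1 e2. subst y.
  rewrite e2 qchi_iso; last by apply/isoLE; exists (addNN n0 mn.1), (addNN n0 mn.2).
  by rewrite diff_shift cdist_refl.
- move=> s' hin.
  have [w ew] := stab_q s'. set y := sx s' in ew.
  have hly : cyl lam y by have [] := hin _ (or_introl erefl).
  have hc0 : cyl (seg0 (shiftp x n0) n) (shiftp y n0).
    apply/cyl_seg. rewrite !PM_shift ?le0NN //.
    move/cylE: hly; rewrite kdeg_PM0 => hly.
    apply: agree_PM hly _ _; [apply leNN_add2l, le0NN| apply leNN_refl].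
  have [m hm] := hprop _ hc0.
  exists w; split; first by rewrite ew; apply qstab_rel.
  exists (addNN n0 m). have := hm w. rewrite /= /sh_pv. apply.
  move=> mn hmn /shift_eqE hs.
  have hse : SE (addNN n0 mn.1) y (addNN n0 mn.2) y.
    have s1 : SE (addNN n0 mn.1) y mn.1 (shiftp y n0).
      have := SE_add mn.1 (SE_shift y n0). by rewrite add0NN.
    have s2 : SE (addNN n0 mn.2) y mn.2 (shiftp y n0).
      have := SE_add mn.2 (SE_shift y n0). by rewrite add0NN.
    exact: SE_trans s1 (SE_trans hs (SE_sym s2)).
  have hb := hin (bmn mn) (or_intror (List.in_map _ _ _ hmn)).
  case: hb => _ /= hK.
  have := hK (diffNN (addNN n0 mn.1) (addNN n0 mn.2)).
  rewrite ew /= qchi_iso; last by apply/isoLE; exists (addNN n0 mn.1), (addNN n0 mn.2).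
  rewrite /dmn (_ : diffNN mn.1 mn.2 = diffNN (addNN n0 mn.1) (addNN n0 mn.2)); last by rewrite diff_shift.
  apply. by exists y.
Qed.
End Part1.

Theorem proposition4p15 (k : nat) (L : kgraph k) (HL : row_finite_no_sources L) :
  (forall D : kobj L * torus k -> Prop, cond_i D -> cond_ii D ->
     exists U : stab L -> Prop,
       open_stab U /\ G_invariant U /\
       (forall x z, q_preimage U x z <-> D_saturation D x z) /\
       (forall U' : stab L -> Prop, open_stab U' -> G_invariant U' ->
          (forall x z, q_preimage U' x z <-> D_saturation D x z) ->
          forall s, U s <-> U' s)) /\
  (forall U : stab L -> Prop, open_stab U -> G_invariant U ->
     exists D : kobj L * torus k -> Prop,
       cond_i D /\ cond_ii D /\
       (forall x z, q_preimage U x z <-> D_saturation D x z) /\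
       (forall D' : kobj L * torus k -> Prop, cond_i D' -> cond_ii D' ->
          (forall x z, q_preimage U x z <-> D_saturation D' x z) ->
          forall p, D p <-> D' p)).
Proof.
split.
- move=> D hi hii. exists (UD D); split; first exact: UD_open.
  split; first exact: UD_inv.
  split; first by move=> x z; apply UD_q.
  move=> U' _ _ hU' s. have [z ez] := stab_q s.
  rewrite ez -!q_preE UD_q //. by rewrite hU'.
- move=> U hUo hUi. exists (DU U); split; first exact: part2_cond_i.
  split; first exact: part2_cond_ii.
  split; first by move=> x z; apply part2_sat.
  move=> D' hi' _ hD' p.
  have heq : forall x z, D_saturation (DU U) x z <-> D_saturation D' x z.
    by move=> x z; rewrite -part2_sat // hD'.
  split; first exact: D_unique (part2_cond_i hUi) hi' heq p.
  apply: D_unique hi' (part2_cond_i hUi) _ p => x z. by rewrite heq.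
Qed.
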